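(* Let $11/5\le\gamma\le9$ and consider the SIEMS7 method ($\mathrm{k}=7$) with coefficients defined as in the context. Then $\sigma_{\mathrm{F}}=1$, $\sigma_{\mathrm{E}}=\dfrac{|c(\pi)|}{|a(\pi)|}$, $$\lambda_{\mathrm{I}}=\frac{105(1-2\gamma)^6}{16(420\gamma^6-1050\gamma^4+1400\gamma^3-840\gamma^2+252\gamma-31)},$$ so that $\mathfrak{I}_{\mathrm{IE}}=\dfrac{(1-2\gamma)^6}{64\gamma^6+192\gamma^5-240\gamma^4+160\gamma^3-60\gamma^2+12\gamma-1}$.
   Context: The $\gamma$-parameterized SIEMS-$\mathrm{k}$ method has coefficients $a_j$ ($0\le j\le\mathrm{k}-1$), $b_j$ ($0\le j\le\mathrm{k}$), $c_j$ ($0\le j\le\mathrm{k}-1$) determined by the polynomial identities (in $\zeta$) $\sum_{j=0}^{\mathrm{k}-1}a_j\zeta^{\mathrm{k}-j-1}=\sum_{j=1}^{\mathrm{k}}\frac{f^{(j)}(1)}{j!}(\zeta-1)^{j-1}$ with $f(z)=(\gamma z-\gamma+1)^{\mathrm{k}-1}z\ln z$; $\sum_{j=0}^{\mathrm{k}}b_j\zeta^{\mathrm{k}-j}=\zeta(\gamma\zeta-\gamma+1)^{\mathrm{k}-1}$; $\sum_{j=0}^{\mathrm{k}-1}c_j\zeta^{\mathrm{k}-j-1}=\zeta(\gamma\zeta-\gamma+1)^{\mathrm{k}-1}-\gamma^{\mathrm{k}-1}(\zeta-1)^{\mathrm{k}}$. Define $a(\theta)=\sum_j a_je^{\imath j\theta}$,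 $b(\theta)=\sum_j b_je^{\imath j\theta}$, $c(\theta)=\sum_jc_je^{\imath j\theta}$, $\sigma_{\mathrm{F}}=\max_{\theta\in[0,2\pi)}|1/a(\theta)|$, $\sigma_{\mathrm{E}}=\max_{\theta\in[0,2\pi)}|c(\theta)/a(\theta)|$, $\lambda_{\mathrm{I}}=\min_{\theta\in[0,2\pi)}\Re[b(\theta)/a(\theta)]$, $\mathfrak{I}_{\mathrm{IE}}=\lambda_{\mathrm{I}}/\sigma_{\mathrm{E}}$. *)

(* Defs.v *)
From Stdlib Require Import Reals Arith Factorial.
From Coquelicot Require Import Coquelicot.
Open Scope R_scope.

Definition fSIEMS (k : nat) (g : R) (z : R) : R :=
  (g * z - g + 1) ^ (k - 1) * z * ln z.

Definition cexpi (t : R) : C := (cos t, sin t).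

Definition trig_sum (p : nat -> R) (n : nat) (t : R) : C :=
  sum_n (fun j => Cmult (RtoC (p j)) (cexpi (INR j * t))) n.

Definition SIEMS_a_coeffs (k : nat) (g : R) (a : nat -> R) : Prop :=
  forall zeta : R,
    sum_f_R0 (fun j => a j * zeta ^ (k - j - 1)) (k - 1) =
    sum_f_R0 (fun i => Derive_n (fSIEMS k g) (S i) 1 / INR (fact (S i)) * (zeta - 1) ^ i)
             (k - 1).

Definition SIEMS_b_coeffs (k : nat) (g : R) (b : nat -> R) : Prop :=
  forall zeta : R,
    sum_f_R0 (fun j => b j * zeta ^ (k - j)) k = zeta * (g * zeta - g + 1) ^ (k - 1).

Definition SIEMS_c_coeffs (k : nat) (g : R) (c : nat -> R) : Prop :=
  forall zeta : R,
    sum_f_R0 (fun j => c j * zeta ^ (k - j - 1)) (k - 1) =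
    zeta * (g * zeta - g + 1) ^ (k - 1) - g ^ (k - 1) * (zeta - 1) ^ k.

Definition is_max_of (S : R -> Prop) (v : R) : Prop := S v /\ forall x, S x -> x <= v.
Definition is_min_of (S : R -> Prop) (v : R) : Prop := S v /\ forall x, S x -> v <= x.

Definition range_0_2pi (F : R -> R) : R -> Prop :=
  fun v => exists t, 0 <= t < 2 * PI /\ v = F t.

(* Main.v *)
Require Import Defs.
From Stdlib Require Import Reals Lra Lia Factorial.
From Coquelicot Require Import Coquelicot.
Open Scope R_scope.
From Stdlib Require Import ZArith List.
Open Scope R_scope.
Definition Dn (n : nat) (g z : R) : R :=
  match n with
  | 0%nat => (1 * g ^ 0 * (g * z - g + 1) ^ 6 * z) * ln z
  | 1%nat => (6 * g ^ 1 * (g * z - g + 1) ^ 5 * z + 1 * g ^ 0 * (g * z - g + 1) ^ 6) * ln z + (1) * (1 * g ^ 0 * (g * z - g + 1) ^ 6 * z) / z ^ 1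
  | 2%nat => (30 * g ^ 2 * (g * z - g + 1) ^ 4 * z + 12 * g ^ 1 * (g * z - g + 1) ^ 5) * ln z + (2) * (6 * g ^ 1 * (g * z - g + 1) ^ 5 * z + 1 * g ^ 0 * (g * z - g + 1) ^ 6) / z ^ 1 + (-1) * (1 * g ^ 0 * (g * z - g + 1) ^ 6 * z) / z ^ 2
  | 3%nat => (120 * g ^ 3 * (g * z - g + 1) ^ 3 * z + 90 * g ^ 2 * (g * z - g + 1) ^ 4) * ln z + (3) * (30 * g ^ 2 * (g * z - g + 1) ^ 4 * z + 12 * g ^ 1 * (g * z - g + 1) ^ 5) / z ^ 1 + (-3) * (6 * g ^ 1 * (g * z - g + 1) ^ 5 * z + 1 * g ^ 0 * (g * z - g + 1) ^ 6) / z ^ 2 + (2) * (1 * g ^ 0 * (g * z - g + 1) ^ 6 * z) / z ^ 3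
  | 4%nat => (360 * g ^ 4 * (g * z - g + 1) ^ 2 * z + 480 * g ^ 3 * (g * z - g + 1) ^ 3) * ln z + (4) * (120 * g ^ 3 * (g * z - g + 1) ^ 3 * z + 90 * g ^ 2 * (g * z - g + 1) ^ 4) / z ^ 1 + (-6) * (30 * g ^ 2 * (g * z - g + 1) ^ 4 * z + 12 * g ^ 1 * (g * z - g + 1) ^ 5) / z ^ 2 + (8) * (6 * g ^ 1 * (g * z - g + 1) ^ 5 * z + 1 * g ^ 0 * (g * z - g + 1) ^ 6) / z ^ 3 + (-6) * (1 * g ^ 0 * (g * z - g + 1) ^ 6 * z) / z ^ 4
  | 5%nat => (720 * g ^ 5 * (g * z - g + 1) ^ 1 * z + 1800 * g ^ 4 * (g * z - g + 1) ^ 2) * ln z + (5) * (360 * g ^ 4 * (g * z - g + 1) ^ 2 * z + 480 * g ^ 3 * (g * z - g + 1) ^ 3) / z ^ 1 + (-10) * (120 * g ^ 3 * (g * z - g + 1) ^ 3 * z + 90 * g ^ 2 * (g * z - g + 1) ^ 4) / z ^ 2 + (20) * (30 * g ^ 2 * (g * z - g + 1) ^ 4 * z + 12 * g ^ 1 * (g * z - g + 1) ^ 5) / z ^ 3 + (-30) * (6 * g ^ 1 * (g * z - g + 1) ^ 5 * z + 1 * g ^ 0 * (g * z - g + 1) ^ 6) / z ^ 4 + (24) * (1 * g ^ 0 * (g * z - g + 1) ^ 6 * z) / z ^ 5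
  | 6%nat => (720 * g ^ 6 * (g * z - g + 1) ^ 0 * z + 4320 * g ^ 5 * (g * z - g + 1) ^ 1) * ln z + (6) * (720 * g ^ 5 * (g * z - g + 1) ^ 1 * z + 1800 * g ^ 4 * (g * z - g + 1) ^ 2) / z ^ 1 + (-15) * (360 * g ^ 4 * (g * z - g + 1) ^ 2 * z + 480 * g ^ 3 * (g * z - g + 1) ^ 3) / z ^ 2 + (40) * (120 * g ^ 3 * (g * z - g + 1) ^ 3 * z + 90 * g ^ 2 * (g * z - g + 1) ^ 4) / z ^ 3 + (-90) * (30 * g ^ 2 * (g * z - g + 1) ^ 4 * z + 12 * g ^ 1 * (g * z - g + 1) ^ 5) / z ^ 4 + (144) * (6 * g ^ 1 * (g * z - g + 1) ^ 5 * z + 1 * g ^ 0 * (g * z - g + 1) ^ 6) / z ^ 5 + (-120) * (1 * g ^ 0 * (g * z - g + 1) ^ 6 * z) / z ^ 6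
  | 7%nat => (5040 * g ^ 6 * (g * z - g + 1) ^ 0) * ln z + (7) * (720 * g ^ 6 * (g * z - g + 1) ^ 0 * z + 4320 * g ^ 5 * (g * z - g + 1) ^ 1) / z ^ 1 + (-21) * (720 * g ^ 5 * (g * z - g + 1) ^ 1 * z + 1800 * g ^ 4 * (g * z - g + 1) ^ 2) / z ^ 2 + (70) * (360 * g ^ 4 * (g * z - g + 1) ^ 2 * z + 480 * g ^ 3 * (g * z - g + 1) ^ 3) / z ^ 3 + (-210) * (120 * g ^ 3 * (g * z - g + 1) ^ 3 * z + 90 * g ^ 2 * (g * z - g + 1) ^ 4) / z ^ 4 + (504) * (30 * g ^ 2 * (g * z - g + 1) ^ 4 * z + 12 * g ^ 1 * (g * z - g + 1) ^ 5) / z ^ 5 + (-840) * (6 * g ^ 1 * (g * z - g + 1) ^ 5 * z + 1 * g ^ 0 * (g * z - g + 1) ^ 6) / z ^ 6 + (720) * (1 * g ^ 0 * (g * z - g + 1) ^ 6 * z) / z ^ 7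
  | _ => 0
  end.

Lemma dstep0 (g z : R) : 0 < z -> is_derive (fun z => (1 * g ^ 0 * (g * z - g + 1) ^ 6 * z) * ln z) z ((6 * g ^ 1 * (g * z - g + 1) ^ 5 * z + 1 * g ^ 0 * (g * z - g + 1) ^ 6) * ln z + (1) * (1 * g ^ 0 * (g * z - g + 1) ^ 6 * z) / z ^ 1).
Proof. intros Hz. auto_derive; [..]; try (repeat split; try lra; repeat apply Rmult_integral_contrapositive_currified; lra); field; repeat split; lra. Qed.

Lemma dstep1 (g z : R) : 0 < z -> is_derive (fun z => (6 * g ^ 1 * (g * z - g + 1) ^ 5 * z + 1 * g ^ 0 * (g * z - g + 1) ^ 6) * ln z + (1) * (1 * g ^ 0 * (g * z - g + 1) ^ 6 * z) / z ^ 1) z ((30 * g ^ 2 * (g * z - g + 1) ^ 4 * z + 12 * g ^ 1 * (g * z - g + 1) ^ 5) * ln z + (2) * (6 * g ^ 1 * (g * z - g + 1) ^ 5 * z + 1 * g ^ 0 * (g * z - g + 1) ^ 6) / z ^ 1 + (-1) * (1 * g ^ 0 * (g * z - g + 1) ^ 6 * z) / z ^ 2).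
Proof. intros Hz. auto_derive; [..]; try (repeat split; try lra; repeat apply Rmult_integral_contrapositive_currified; lra); field; repeat split; lra. Qed.

Lemma dstep2 (g z : R) : 0 < z -> is_derive (fun z => (30 * g ^ 2 * (g * z - g + 1) ^ 4 * z + 12 * g ^ 1 * (g * z - g + 1) ^ 5) * ln z + (2) * (6 * g ^ 1 * (g * z - g + 1) ^ 5 * z + 1 * g ^ 0 * (g * z - g + 1) ^ 6) / z ^ 1 + (-1) * (1 * g ^ 0 * (g * z - g + 1) ^ 6 * z) / z ^ 2) z ((120 * g ^ 3 * (g * z - g + 1) ^ 3 * z + 90 * g ^ 2 * (g * z - g + 1) ^ 4) * ln z + (3) * (30 * g ^ 2 * (g * z - g + 1) ^ 4 * z + 12 * g ^ 1 * (g * z - g + 1) ^ 5) / z ^ 1 + (-3) * (6 * g ^ 1 * (g * z - g + 1) ^ 5 * z + 1 * g ^ 0 * (g * z - g + 1) ^ 6) / z ^ 2 + (2) * (1 * g ^ 0 * (g * z - g + 1) ^ 6 * z) / z ^ 3).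
Proof. intros Hz. auto_derive; [..]; try (repeat split; try lra; repeat apply Rmult_integral_contrapositive_currified; lra); field; repeat split; lra. Qed.

Lemma dstep3 (g z : R) : 0 < z -> is_derive (fun z => (120 * g ^ 3 * (g * z - g + 1) ^ 3 * z + 90 * g ^ 2 * (g * z - g + 1) ^ 4) * ln z + (3) * (30 * g ^ 2 * (g * z - g + 1) ^ 4 * z + 12 * g ^ 1 * (g * z - g + 1) ^ 5) / z ^ 1 + (-3) * (6 * g ^ 1 * (g * z - g + 1) ^ 5 * z + 1 * g ^ 0 * (g * z - g + 1) ^ 6) / z ^ 2 + (2) * (1 * g ^ 0 * (g * z - g + 1) ^ 6 * z) / z ^ 3) z ((360 * g ^ 4 * (g * z - g + 1) ^ 2 * z + 480 * g ^ 3 * (g * z - g + 1) ^ 3) * ln z + (4) * (120 * g ^ 3 * (g * z - g + 1) ^ 3 * z + 90 * g ^ 2 * (g * z - g + 1) ^ 4) / z ^ 1 + (-6) * (30 * g ^ 2 * (g * z - g + 1) ^ 4 * z + 12 * g ^ 1 * (g * z - g + 1) ^ 5) / z ^ 2 + (8) * (6 * g ^ 1 * (g * z - g + 1) ^ 5 * z + 1 * g ^ 0 * (g * z - g + 1) ^ 6) / z ^ 3 + (-6) * (1 * g ^ 0 * (g * z - g + 1) ^ 6 * z) / z ^ 4).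
Proof. intros Hz. auto_derive; [..]; try (repeat split; try lra; repeat apply Rmult_integral_contrapositive_currified; lra); field; repeat split; lra. Qed.

Lemma dstep4 (g z : R) : 0 < z -> is_derive (fun z => (360 * g ^ 4 * (g * z - g + 1) ^ 2 * z + 480 * g ^ 3 * (g * z - g + 1) ^ 3) * ln z + (4) * (120 * g ^ 3 * (g * z - g + 1) ^ 3 * z + 90 * g ^ 2 * (g * z - g + 1) ^ 4) / z ^ 1 + (-6) * (30 * g ^ 2 * (g * z - g + 1) ^ 4 * z + 12 * g ^ 1 * (g * z - g + 1) ^ 5) / z ^ 2 + (8) * (6 * g ^ 1 * (g * z - g + 1) ^ 5 * z + 1 * g ^ 0 * (g * z - g + 1) ^ 6) / z ^ 3 + (-6) * (1 * g ^ 0 * (g * z - g + 1) ^ 6 * z) / z ^ 4) z ((720 * g ^ 5 * (g * z - g + 1) ^ 1 * z + 1800 * g ^ 4 * (g * z - g + 1) ^ 2) * ln z + (5) * (360 * g ^ 4 * (g * z - g + 1) ^ 2 * z + 480 * g ^ 3 * (g * z - g + 1) ^ 3) / z ^ 1 + (-10) * (120 * g ^ 3 * (g * z - g + 1) ^ 3 * z + 90 * g ^ 2 * (g * z - g + 1) ^ 4) / z ^ 2 + (20) * (30 * g ^ 2 * (g * z - g + 1) ^ 4 * z + 12 * g ^ 1 * (g * z - g + 1) ^ 5) / z ^ 3 + (-30) * (6 * g ^ 1 * (g * z - g + 1) ^ 5 * z + 1 * g ^ 0 * (g * z - g + 1) ^ 6) / z ^ 4 + (24) * (1 * g ^ 0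 * (g * z - g + 1) ^ 6 * z) / z ^ 5).
Proof. intros Hz. auto_derive; [..]; try (repeat split; try lra; repeat apply Rmult_integral_contrapositive_currified; lra); field; repeat split; lra. Qed.

Lemma dstep5 (g z : R) : 0 < z -> is_derive (fun z => (720 * g ^ 5 * (g * z - g + 1) ^ 1 * z + 1800 * g ^ 4 * (g * z - g + 1) ^ 2) * ln z + (5) * (360 * g ^ 4 * (g * z - g + 1) ^ 2 * z + 480 * g ^ 3 * (g * z - g + 1) ^ 3) / z ^ 1 + (-10) * (120 * g ^ 3 * (g * z - g + 1) ^ 3 * z + 90 * g ^ 2 * (g * z - g + 1) ^ 4) / z ^ 2 + (20) * (30 * g ^ 2 * (g * z - g + 1) ^ 4 * z + 12 * g ^ 1 * (g * z - g + 1) ^ 5) / z ^ 3 + (-30) * (6 * g ^ 1 * (g * z - g + 1) ^ 5 * z + 1 * g ^ 0 * (g * z - g + 1) ^ 6) / z ^ 4 + (24) * (1 * g ^ 0 * (g * z - g + 1) ^ 6 * z) / z ^ 5) z ((720 * g ^ 6 * (g * z - g + 1) ^ 0 * z + 4320 * g ^ 5 * (g * z - g + 1) ^ 1) * ln z + (6) * (720 * g ^ 5 * (g * z - g + 1) ^ 1 * z + 1800 * g ^ 4 * (g * z - g + 1) ^ 2) / z ^ 1 + (-15) * (360 * g ^ 4 * (g * z - g + 1) ^ 2 * z + 480 * g ^ 3 * (g * z - g + 1) ^ 3) / z ^ 2 + (40) * (120 * g ^ 3 * (g * z - g + 1) ^ 3 * z + 90 * g ^ 2 * (g * z - g + 1)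 ^ 4) / z ^ 3 + (-90) * (30 * g ^ 2 * (g * z - g + 1) ^ 4 * z + 12 * g ^ 1 * (g * z - g + 1) ^ 5) / z ^ 4 + (144) * (6 * g ^ 1 * (g * z - g + 1) ^ 5 * z + 1 * g ^ 0 * (g * z - g + 1) ^ 6) / z ^ 5 + (-120) * (1 * g ^ 0 * (g * z - g + 1) ^ 6 * z) / z ^ 6).
Proof. intros Hz. auto_derive; [..]; try (repeat split; try lra; repeat apply Rmult_integral_contrapositive_currified; lra); field; repeat split; lra. Qed.

Lemma dstep6 (g z : R) : 0 < z -> is_derive (fun z => (720 * g ^ 6 * (g * z - g + 1) ^ 0 * z + 4320 * g ^ 5 * (g * z - g + 1) ^ 1) * ln z + (6) * (720 * g ^ 5 * (g * z - g + 1) ^ 1 * z + 1800 * g ^ 4 * (g * z - g + 1) ^ 2) / z ^ 1 + (-15) * (360 * g ^ 4 * (g * z - g + 1) ^ 2 * z + 480 * g ^ 3 * (g * z - g + 1) ^ 3) / z ^ 2 + (40) * (120 * g ^ 3 * (g * z - g + 1) ^ 3 * z + 90 * g ^ 2 * (g * z - g + 1) ^ 4) / z ^ 3 + (-90) * (30 * g ^ 2 * (g * z - g + 1) ^ 4 * z + 12 * g ^ 1 * (g * z - g + 1) ^ 5) / z ^ 4 + (144) * (6 * g ^ 1 * (g * z - g + 1) ^ 5 * z + 1 * g ^ 0 * (g * z - g + 1) ^ 6) / z ^ 5 + (-120) * (1 * g ^ 0 * (g * z - g + 1) ^ 6 * z) / z ^ 6) z ((5040 * g ^ 6 * (g * z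 - g + 1) ^ 0) * ln z + (7) * (720 * g ^ 6 * (g * z - g + 1) ^ 0 * z + 4320 * g ^ 5 * (g * z - g + 1) ^ 1) / z ^ 1 + (-21) * (720 * g ^ 5 * (g * z - g + 1) ^ 1 * z + 1800 * g ^ 4 * (g * z - g + 1) ^ 2) / z ^ 2 + (70) * (360 * g ^ 4 * (g * z - g + 1) ^ 2 * z + 480 * g ^ 3 * (g * z - g + 1) ^ 3) / z ^ 3 + (-210) * (120 * g ^ 3 * (g * z - g + 1) ^ 3 * z + 90 * g ^ 2 * (g * z - g + 1) ^ 4) / z ^ 4 + (504) * (30 * g ^ 2 * (g * z - g + 1) ^ 4 * z + 12 * g ^ 1 * (g * z - g + 1) ^ 5) / z ^ 5 + (-840) * (6 * g ^ 1 * (g * z - g + 1) ^ 5 * z + 1 * g ^ 0 * (g * z - g + 1) ^ 6) / z ^ 6 + (720) * (1 * g ^ 0 * (g * z - g + 1) ^ 6 * z) / z ^ 7).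
Proof. intros Hz. auto_derive; [..]; try (repeat split; try lra; repeat apply Rmult_integral_contrapositive_currified; lra); field; repeat split; lra. Qed.
Definition ai (j : nat) (g : R) : R :=
  match j with
  | 0%nat => ((-10) * g ^ 0 + (84) * g ^ 1 + (-315) * g ^ 2 + (700) * g ^ 3 + (-1050) * g ^ 4 + (1260) * g ^ 5 + (420) * g ^ 6)
  | 1%nat => ((74) * g ^ 0 + (-630) * g ^ 1 + (2415) * g ^ 2 + (-5600) * g ^ 3 + (9450) * g ^ 4 + (-5040) * g ^ 5 + (-2520) * g ^ 6)
  | 2%nat => ((-241) * g ^ 0 + (2100) * g ^ 1 + (-8400) * g ^ 2 + (21700) * g ^ 3 + (-25200) * g ^ 4 + (6300) * g ^ 5 + (6300) * g ^ 6)
  | 3%nat => ((459) * g ^ 0 + (-4200) * g ^ 1 + (18900) * g ^ 2 + (-36400) * g ^ 3 + (27300) * g ^ 4 + (-8400) * g ^ 6)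
  | 4%nat => ((-591) * g ^ 0 + (6300) * g ^ 1 + (-19425) * g ^ 2 + (24500) * g ^ 3 + (-9450) * g ^ 4 + (-6300) * g ^ 5 + (6300) * g ^ 6)
  | 5%nat => ((669) * g ^ 0 + (-3234) * g ^ 1 + (5565) * g ^ 2 + (-2800) * g ^ 3 + (-3150) * g ^ 4 + (5040) * g ^ 5 + (-2520) * g ^ 6)
  | 6%nat => ((60) * g ^ 0 + (-420) * g ^ 1 + (1260) * g ^ 2 + (-2100) * g ^ 3 + (2100) * g ^ 4 + (-1260) * g ^ 5 + (420) * g ^ 6)
  | _ => 0
  end.
Definition bi (j : nat) (g : R) : R :=
  match j with
  | 0%nat => ((1) * g ^ 6)
  | 1%nat => ((6) * g ^ 5 + (-6) * g ^ 6)
  | 2%nat => ((15) * g ^ 4 + (-30) * g ^ 5 + (15) * g ^ 6)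
  | 3%nat => ((20) * g ^ 3 + (-60) * g ^ 4 + (60) * g ^ 5 + (-20) * g ^ 6)
  | 4%nat => ((15) * g ^ 2 + (-60) * g ^ 3 + (90) * g ^ 4 + (-60) * g ^ 5 + (15) * g ^ 6)
  | 5%nat => ((6) * g ^ 1 + (-30) * g ^ 2 + (60) * g ^ 3 + (-60) * g ^ 4 + (30) * g ^ 5 + (-6) * g ^ 6)
  | 6%nat => ((1) * g ^ 0 + (-6) * g ^ 1 + (15) * g ^ 2 + (-20) * g ^ 3 + (15) * g ^ 4 + (-6) * g ^ 5 + (1) * g ^ 6)
  | 7%nat => 0
  | _ => 0
  end.
Definition ci (j : nat) (g : R) : R :=
  match j with
  | 0%nat => ((6) * g ^ 5 + (1) * g ^ 6)
  | 1%nat => ((15) * g ^ 4 + (-30) * g ^ 5 + (-6) * g ^ 6)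
  | 2%nat => ((20) * g ^ 3 + (-60) * g ^ 4 + (60) * g ^ 5 + (15) * g ^ 6)
  | 3%nat => ((15) * g ^ 2 + (-60) * g ^ 3 + (90) * g ^ 4 + (-60) * g ^ 5 + (-20) * g ^ 6)
  | 4%nat => ((6) * g ^ 1 + (-30) * g ^ 2 + (60) * g ^ 3 + (-60) * g ^ 4 + (30) * g ^ 5 + (15) * g ^ 6)
  | 5%nat => ((1) * g ^ 0 + (-6) * g ^ 1 + (15) * g ^ 2 + (-20) * g ^ 3 + (15) * g ^ 4 + (-6) * g ^ 5 + (-6) * g ^ 6)
  | 6%nat => ((1) * g ^ 6)
  | _ => 0
  end.

Lemma eq_via (X Y E : R) : X = Y -> E = X - Y -> E = 0.
Proof. intros H1 H2. rewrite H2, H1. ring. Qed.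

Lemma Derive_n_eq (g : R) : forall n, (n <= 7)%nat -> forall z, 0 < z ->
  Derive_n (fSIEMS 7 g) n z = Dn n g z.
Proof.
  induction n as [|n IH]; intros Hn z Hz.
  - simpl. unfold fSIEMS. simpl. ring.
  - simpl Derive_n.
    rewrite (Derive_ext_loc _ (Dn n g)).
    2:{ apply (locally_open (fun t => 0 < t)). apply open_gt.
        intros t Ht. apply IH; [lia|exact Ht]. exact Hz. }
    apply is_derive_unique.
    destruct n as [|[|[|[|[|[|[|n]]]]]]].
    + exact (dstep0 g z Hz).
    + exact (dstep1 g z Hz).
    + exact (dstep2 g z Hz).
    + exact (dstep3 g z Hz).
    + exact (dstep4 g z Hz).
    + exact (dstep5 g z Hz).
    + exact (dstep6 g z Hz).
    + exfalso; lia.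
Qed.

Lemma sum7 (f : nat -> R) : sum_f_R0 f 6 = f 0%nat + f 1%nat + f 2%nat + f 3%nat + f 4%nat + f 5%nat + f 6%nat.
Proof. reflexivity. Qed.
Lemma sum8 (f : nat -> R) : sum_f_R0 f 7 = f 0%nat + f 1%nat + f 2%nat + f 3%nat + f 4%nat + f 5%nat + f 6%nat + f 7%nat.
Proof. reflexivity. Qed.

Lemma poly7_zero (e0 e1 e2 e3 e4 e5 e6 : R) :
  (forall z, e0 * z^6 + e1 * z^5 + e2 * z^4 + e3 * z^3 + e4 * z^2 + e5 * z + e6 = 0) ->
  e0 = 0 /\ e1 = 0 /\ e2 = 0 /\ e3 = 0 /\ e4 = 0 /\ e5 = 0 /\ e6 = 0.
Proof.
  intros H.
  pose proof (H 0) as H0. pose proof (H 1) as H1. pose proof (H (-1)) as H2.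
  pose proof (H 2) as H3. pose proof (H (-2)) as H4. pose proof (H 3) as H5.
  pose proof (H (-3)) as H6. simpl in *.
  repeat split; lra.
Qed.

Lemma poly8_zero (e0 e1 e2 e3 e4 e5 e6 e7 : R) :
  (forall z, e0 * z^7 + e1 * z^6 + e2 * z^5 + e3 * z^4 + e4 * z^3 + e5 * z^2 + e6 * z + e7 = 0) ->
  e0 = 0 /\ e1 = 0 /\ e2 = 0 /\ e3 = 0 /\ e4 = 0 /\ e5 = 0 /\ e6 = 0 /\ e7 = 0.
Proof.
  intros H.
  pose proof (H 0) as H0. pose proof (H 1) as H1. pose proof (H (-1)) as H2.
  pose proof (H 2) as H3. pose proof (H (-2)) as H4. pose proof (H 3) as H5.
  pose proof (H (-3)) as H6. pose proof (H 4) as H7. simpl in *.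
  repeat split; lra.
Qed.

Lemma fact_vals : INR (fact 1) = 1 /\ INR (fact 2) = 2 /\ INR (fact 3) = 6 /\ INR (fact 4) = 24
  /\ INR (fact 5) = 120 /\ INR (fact 6) = 720 /\ INR (fact 7) = 5040.
Proof. repeat split; rewrite INR_IZR_INZ; reflexivity. Qed.

Lemma a_vals (g : R) (a : nat -> R) : SIEMS_a_coeffs 7 g a ->
  a 0%nat = ai 0 g / 420 /\ a 1%nat = ai 1 g / 420 /\ a 2%nat = ai 2 g / 420 /\
  a 3%nat = ai 3 g / 420 /\ a 4%nat = ai 4 g / 420 /\ a 5%nat = ai 5 g / 420 /\
  a 6%nat = ai 6 g / 420.
Proof.
  intros Ha.
  assert (Hd : forall i, (i <= 6)%nat -> Derive_n (fSIEMS 7 g) (S i) 1 = Dn (S i) g 1).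
  { intros i Hi. apply Derive_n_eq; [lia|lra]. }
  destruct fact_vals as (F1&F2&F3&F4&F5&F6&F7).
  assert (H : forall z, (a 0%nat - ai 0 g / 420) * z^6 + (a 1%nat - ai 1 g / 420) * z^5
     + (a 2%nat - ai 2 g / 420) * z^4 + (a 3%nat - ai 3 g / 420) * z^3
     + (a 4%nat - ai 4 g / 420) * z^2 + (a 5%nat - ai 5 g / 420) * z
     + (a 6%nat - ai 6 g / 420) = 0).
  { intros z. specialize (Ha z).
    replace (7 - 1)%nat with 6%nat in Ha by reflexivity.
    rewrite !sum7 in Ha. cbv beta in Ha.
    rewrite !Hd in Ha by lia.
    rewrite F1, F2, F3, F4, F5, F6, F7 in Ha.
    simpl Nat.sub in Ha.
    unfold Dn in Ha. rewrite ln_1 in Ha.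
    unfold ai. simpl. 
    apply (eq_via _ _ _ Ha). field. }
  apply poly7_zero in H. lra.
Qed.

Lemma b_vals (g : R) (b : nat -> R) : SIEMS_b_coeffs 7 g b ->
  b 0%nat = bi 0 g /\ b 1%nat = bi 1 g /\ b 2%nat = bi 2 g /\ b 3%nat = bi 3 g /\
  b 4%nat = bi 4 g /\ b 5%nat = bi 5 g /\ b 6%nat = bi 6 g /\ b 7%nat = bi 7 g.
Proof.
  intros Hb.
  assert (H : forall z, (b 0%nat - bi 0 g) * z^7 + (b 1%nat - bi 1 g) * z^6
     + (b 2%nat - bi 2 g) * z^5 + (b 3%nat - bi 3 g) * z^4
     + (b 4%nat - bi 4 g) * z^3 + (b 5%nat - bi 5 g) * z^2
     + (b 6%nat - bi 6 g) * z + (b 7%nat - bi 7 g) = 0).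
  { intros z. specialize (Hb z).
    rewrite !sum8 in Hb. cbv beta in Hb. simpl Nat.sub in Hb.
    unfold bi. 
    apply (eq_via _ _ _ Hb). ring. }
  apply poly8_zero in H. lra.
Qed.

Lemma c_vals (g : R) (c : nat -> R) : SIEMS_c_coeffs 7 g c ->
  c 0%nat = ci 0 g /\ c 1%nat = ci 1 g /\ c 2%nat = ci 2 g /\
  c 3%nat = ci 3 g /\ c 4%nat = ci 4 g /\ c 5%nat = ci 5 g /\
  c 6%nat = ci 6 g.
Proof.
  intros Hc.
  assert (H : forall z, (c 0%nat - ci 0 g) * z^6 + (c 1%nat - ci 1 g) * z^5
     + (c 2%nat - ci 2 g) * z^4 + (c 3%nat - ci 3 g) * z^3
     + (c 4%nat - ci 4 g) * z^2 + (c 5%nat - ci 5 g) * z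
     + (c 6%nat - ci 6 g) = 0).
  { intros z. specialize (Hc z).
    replace (7 - 1)%nat with 6%nat in Hc by reflexivity.
    rewrite !sum7 in Hc. cbv beta in Hc. simpl Nat.sub in Hc.
    unfold ci.
    apply (eq_via _ _ _ Hc). ring. }
  apply poly7_zero in H. lra.
Qed.
Fixpoint bsum (l : list (Z * (nat * nat * nat * nat))) (p q r w : R) : R :=
  match l with
  | nil => 0
  | cons (c, (k1, k2, l1, l2)) t => IZR c * p ^ k1 * q ^ k2 * r ^ l1 * w ^ l2 + bsum t p q r w
  end.

Lemma bsum_nonneg (l : list (Z * (nat * nat * nat * nat))) (p q r w : R) :
  forallb (fun e => Z.leb 0 (fst e)) l = true ->
  0 <= p -> 0 <= q -> 0 <= r -> 0 <= w -> 0 <= bsum l p q r w.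
Proof.
  intros Hl Hp Hq Hr Hw. induction l as [|[c [[[k1 k2] l1] l2]] t IH]; simpl in *.
  - lra.
  - apply andb_prop in Hl. destruct Hl as [H1 H2].
    apply Rplus_le_le_0_compat; [|exact (IH H2)].
    apply Z.leb_le in H1. apply IZR_le in H1.
    repeat apply Rmult_le_pos; try apply pow_le; assumption.
Qed.

Fixpoint Tc (n : nat) (x : R) : R :=
  match n with 0%nat => 1 | S m => Tc m x * x - (1 - x ^ 2) * Uc m x end
with Uc (n : nat) (x : R) : R :=
  match n with 0%nat => 0 | S m => Uc m x * x + Tc m x end.

Definition XA (x g : R) : R := sum_f_R0 (fun j => ai j g * Tc j x) 6.
Definition YA (x g : R) : R := sum_f_R0 (fun j => ai j g * Uc j x) 6.
Definition XB (x g : R) : R := sum_f_R0 (fun j => bi j g * Tc j x) 7.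
Definition YB (x g : R) : R := sum_f_R0 (fun j => bi j g * Uc j x) 7.
Definition XC (x g : R) : R := sum_f_R0 (fun j => ci j g * Tc j x) 6.
Definition YC (x g : R) : R := sum_f_R0 (fun j => ci j g * Uc j x) 6.
Definition Dg (g : R) : R := 420 * g ^ 6 - 1050 * g ^ 4 + 1400 * g ^ 3 - 840 * g ^ 2 + 252 * g - 31.
Definition Cp (g : R) : R := 64 * g ^ 6 + 192 * g ^ 5 - 240 * g ^ 4 + 160 * g ^ 3 - 60 * g ^ 2 + 12 * g - 1.

Definition K2 (x g : R) : R :=
  (80656) * x ^ 0 * g ^ 0 + (-3760512) * x ^ 0 * g ^ 1 + (26621952) * x ^ 0 * g ^ 2 + (-114679040) * x ^ 0 * g ^ 3 + (326995200) * x ^ 0 * g ^ 4 + (-639744000) * x ^ 0 * g ^ 5 + (863555840) * x ^ 0 * g ^ 6 + (-778606080) * x ^ 0 * g ^ 7 + (413481600) * x ^ 0 * g ^ 8 + (-65856000) * x ^ 0 * g ^ 9 + (-39513600) * x ^ 0 * g ^ 10 + (11289600) * x ^ 0 * g ^ 12 + (-361168) * x ^ 1 * g ^ 0 + (7125888) * x ^ 1 * g ^ 1 + (-68009088) * x ^ 1 * g ^ 2 + (336896000) * x ^ 1 * g ^ 3 + (-1036358400) * x ^ 1 * g ^ 4 + (2118681600) * x ^ 1 * g ^ 5 + (-2920064000) * x ^ 1 * g ^ 6 + (2608838400) * x ^ 1 * g ^ 7 + (-1270080000) * x ^ 1 * g ^ 8 + (47040000) * x ^ 1 * g ^ 9 +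 (231436800) * x ^ 1 * g ^ 10 + (-56448000) * x ^ 1 * g ^ 12 + (763608) * x ^ 2 * g ^ 0 + (-12076512) * x ^ 2 * g ^ 1 + (87390912) * x ^ 2 * g ^ 2 + (-398596800) * x ^ 2 * g ^ 3 + (1204408800) * x ^ 2 * g ^ 4 + (-2458310400) * x ^ 2 * g ^ 5 + (3346694400) * x ^ 2 * g ^ 6 + (-2801702400) * x ^ 2 * g ^ 7 + (987840000) * x ^ 2 * g ^ 8 + (470400000) * x ^ 2 * g ^ 9 + (-530611200) * x ^ 2 * g ^ 10 + (112896000) * x ^ 2 * g ^ 12 + (-602496) * x ^ 3 * g ^ 0 + (8406048) * x ^ 3 * g ^ 1 + (-53564448) * x ^ 3 * g ^ 2 + (204780800) * x ^ 3 * g ^ 3 + (-536256000) * x ^ 3 * g ^ 4 + (975609600) * x ^ 3 * g ^ 5 + (-1127033600) * x ^ 3 * g ^ 6 + (538137600) * x ^ 3 * g ^ 7 + (522144000) * x ^ 3 * g ^ 8 + (-1034880000) * x ^ 3 * g ^ 9 + (598348800) * x ^ 3 * g ^ 10 + (-112896000) * x ^ 3 * g ^ 12 + (110400) * x ^ 4 * g ^ 0 + (-1220352) * x ^ 4 * g ^ 1 + (5403552) * x ^ 4 * g ^ 2 + (-9128000) * x ^ 4 * g ^ 3 + (-19672800) * x ^ 4 * g ^ 4 + (147705600) * x ^ 4 * g ^ 5 + (-423539200) * x ^ 4 * g ^ 6 + (786508800) * x ^ 4 * g ^ 7 + (-994896000) * x ^ 4 * g ^ 8 + (799680000) * x ^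 4 * g ^ 9 + (-333043200) * x ^ 4 * g ^ 10 + (56448000) * x ^ 4 * g ^ 12 + (38400) * x ^ 5 * g ^ 0 + (-591360) * x ^ 5 * g ^ 1 + (4273920) * x ^ 5 * g ^ 2 + (-19272960) * x ^ 5 * g ^ 3 + (60883200) * x ^ 5 * g ^ 4 + (-143942400) * x ^ 5 * g ^ 5 + (260386560) * x ^ 5 * g ^ 6 + (-353176320) * x ^ 5 * g ^ 7 + (341510400) * x ^ 5 * g ^ 8 + (-216384000) * x ^ 5 * g ^ 9 + (73382400) * x ^ 5 * g ^ 10 + (-11289600) * x ^ 5 * g ^ 12.

Definition K2_0_L : list (Z * (nat * nat * nat * nat)) :=
  ((780458230667199910584%Z, (0, 5, 0, 12)%nat) :: (40859679526368597401760%Z, (0, 5, 1, 11)%nat) :: (979062115192427329311600%Z, (0, 5, 2, 10)%nat) :: (14194101945346328608020000%Z, (0, 5, 3, 9)%nat) :: (138624244998386838246765000%Z, (0, 5, 4, 8)%nat) :: (960472714266452084064840000%Z, (0, 5, 5, 7)%nat) :: (4839089457608782086364500000%Z, (0, 5, 6, 6)%nat) :: (17855120862180448865469000000%Z, (0, 5, 7, 5)%nat) :: (47861668045585444412278125000%Z, (0, 5, 8, 4)%nat) :: (90846676689404597353012500000%Z, (0, 5, 9, 3)%nat) :: (115831187641411364348943750000%Z, (0, 5, 10, 2)%nat) :: (89013429367122702290062500000%Z, (0, 5, 11, 1)%nat) :: (31156404246735930316171875000%Z, (0, 5, 12, 0)%nat) :: (1888979401905347747160%Z, (1, 4, 0,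 12)%nat) :: (99529598416034710360800%Z, (1, 4, 1, 11)%nat) :: (2398489916646257484217200%Z, (1, 4, 2, 10)%nat) :: (34946259020993509146540000%Z, (1, 4, 3, 9)%nat) :: (342765201938659152887025000%Z, (1, 4, 4, 8)%nat) :: (2383485852987903917741400000%Z, (1, 4, 5, 7)%nat) :: (12044063926725868975360500000%Z, (1, 4, 6, 6)%nat) :: (44542441489998154628475000000%Z, (1, 4, 7, 5)%nat) :: (119600136724231133340665625000%Z, (1, 4, 8, 4)%nat) :: (227264677156215182118937500000%Z, (1, 4, 9, 3)%nat) :: (289933198721919084269643750000%Z, (1, 4, 10, 2)%nat) :: (222836683443802870593937500000%Z, (1, 4, 11, 1)%nat) :: (77984815988698371418359375000%Z, (1, 4, 12, 0)%nat) :: (1829767742789155980360%Z, (2, 3, 0, 12)%nat) :: (97032092209208809567200%Z, (2, 3, 1, 11)%nat) :: (2351596149386266095680400%Z, (2, 3, 2, 10)%nat) :: (34432325620880352424380000%Z, (2, 3, 3, 9)%nat) :: (339151546228365805079475000%Z, (2, 3, 4, 8)%nat) :: (2366697492598050534087000000%Z, (2, 3, 5, 7)%nat) :: (11993582550577201693003500000%Z, (2, 3, 6, 6)%nat) :: (44454887462865806764695000000%Z, (2, 3, 7, 5)%nat) :: (119559348004721656585021875000%Z, (2, 3, 8, 4)%nat) :: (227427702802683618986437500000%Z, (2, 3, 9, 3)%nat) :: (290299248654520879631756250000%Z, (2, 3, 10, 2)%nat) :: (223144225872336390408187500000%Z, (2, 3, 11, 1)%nat) :: (78079406017017368001328125000%Z,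 (2, 3, 12, 0)%nat) :: (886867337717538644280%Z, (3, 2, 0, 12)%nat) :: (47332356786838864936800%Z, (3, 2, 1, 11)%nat) :: (1153550355011501849146800%Z, (3, 2, 2, 10)%nat) :: (16972305798451231173660000%Z, (3, 2, 3, 9)%nat) :: (167863207030449281680725000%Z, (3, 2, 4, 8)%nat) :: (1175421643323968828878200000%Z, (3, 2, 5, 7)%nat) :: (5973175520615878212214500000%Z, (3, 2, 6, 6)%nat) :: (22187636338278946348935000000%Z, (3, 2, 7, 5)%nat) :: (59765986175735597329378125000%Z, (3, 2, 8, 4)%nat) :: (113802956077504365381187500000%Z, (3, 2, 9, 3)%nat) :: (145338098608692459949668750000%Z, (3, 2, 10, 2)%nat) :: (111728112714227794906687500000%Z, (3, 2, 11, 1)%nat) :: (39087392067586401801796875000%Z, (3, 2, 12, 0)%nat) :: (215141609623418802720%Z, (4, 1, 0, 12)%nat) :: (11554537191758930160000%Z, (4, 1, 1, 11)%nat) :: (283142499113828125569600%Z, (4, 1, 2, 10)%nat) :: (4185542510352448351920000%Z, (4, 1, 3, 9)%nat) :: (41562107520512938929900000%Z, (4, 1, 4, 8)%nat) :: (291993830115246488671200000%Z, (4, 1, 5, 7)%nat) :: (1487805319348922489454000000%Z, (4, 1, 6, 6)%nat) :: (5537966498229346562700000000%Z, (4, 1, 7, 5)%nat) :: (14939772541347643729987500000%Z, (4, 1, 8, 4)%nat) :: (28474931267128899654750000000%Z, (4, 1, 9, 3)%nat) :: (36383015417964082013025000000%Z, (4, 1, 10, 2)%nat) :: (27971588374246837707750000000%Z,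 (4, 1, 11, 1)%nat) :: (9783869224294195562812500000%Z, (4, 1, 12, 0)%nat) :: (20903101895496231312%Z, (5, 0, 0, 12)%nat) :: (1129457181290013766080%Z, (5, 0, 1, 11)%nat) :: (27823260927960700884000%Z, (5, 0, 2, 10)%nat) :: (413160054565184830200000%Z, (5, 0, 3, 9)%nat) :: (4118377969909661448870000%Z, (5, 0, 4, 8)%nat) :: (29025597636213025961520000%Z, (5, 0, 5, 7)%nat) :: (148274148959535690399000000%Z, (5, 0, 6, 6)%nat) :: (553005031742336136942000000%Z, (5, 0, 7, 5)%nat) :: (1493976808887885548943750000%Z, (5, 0, 8, 4)%nat) :: (2850105789016314215475000000%Z, (5, 0, 9, 3)%nat) :: (3643288832373398340412500000%Z, (5, 0, 10, 2)%nat) :: (2801171195109381810375000000%Z, (5, 0, 11, 1)%nat) :: (979598980796053122656250000%Z, (5, 0, 12, 0)%nat) :: nil).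


Lemma K2_0_nonneg (x g : R) : (-1) <= x <= (0) -> (11/5) <= g <= (9) -> 0 <= K2 x g.
Proof.
  intros Hx Hg.
  assert (E : 769061353143284520000000000 * K2 x g = bsum K2_0_L (1 * x - (-1)) ((0) - 1 * x) (5 * g - (11)) ((45) - 5 * g)) by (unfold K2, K2_0_L; cbn [bsum]; ring).
  assert (P : 0 <= bsum K2_0_L (1 * x - (-1)) ((0) - 1 * x) (5 * g - (11)) ((45) - 5 * g)) by (apply bsum_nonneg; [vm_compute; reflexivity|lra..]).
  lra.
Qed.

Definition K2_1_L : list (Z * (nat * nat * nat * nat)) :=
  ((20903101895496231312%Z, (0, 5, 0, 12)%nat) :: (1129457181290013766080%Z, (0, 5, 1, 11)%nat) :: (27823260927960700884000%Z, (0, 5, 2, 10)%nat) :: (413160054565184830200000%Z, (0, 5, 3, 9)%nat) :: (4118377969909661448870000%Z, (0, 5, 4, 8)%nat) :: (29025597636213025961520000%Z, (0, 5, 5, 7)%nat) :: (148274148959535690399000000%Z, (0, 5, 6, 6)%nat) :: (553005031742336136942000000%Z, (0, 5, 7, 5)%nat) :: (1493976808887885548943750000%Z, (0, 5, 8, 4)%nat) :: (2850105789016314215475000000%Z, (0, 5, 9, 3)%nat) :: (3643288832373398340412500000%Z, (0, 5, 10, 2)%nat) :: (2801171195109381810375000000%Z, (0, 5, 11, 1)%nat) :: (979598980796053122656250000%Z, (0, 5, 12, 0)%nat) :: (49202459404512333480%Z, (1, 4, 0, 12)%nat) :: (2693660263795638165600%Z, (1, 4, 1, 11)%nat) :: (67103207402791193845200%Z,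 (1, 4, 2, 10)%nat) :: (1005929154062662050540000%Z, (1, 4, 3, 9)%nat) :: (10106781014065991401575000%Z, (1, 4, 4, 8)%nat) :: (71695067213974450375800000%Z, (1, 4, 5, 7)%nat) :: (368153457522056433265500000%Z, (1, 4, 6, 6)%nat) :: (1378554488952847745715000000%Z, (1, 4, 7, 5)%nat) :: (3734939795985319752084375000%Z, (1, 4, 8, 4)%nat) :: (7138327784057906788687500000%Z, (1, 4, 9, 3)%nat) :: (9133158533818446546581250000%Z, (1, 4, 10, 2)%nat) :: (7022989776196944723937500000%Z, (1, 4, 11, 1)%nat) :: (2455057743823300638515625000%Z, (1, 4, 12, 0)%nat) :: (46611798207793457430%Z, (2, 3, 0, 12)%nat) :: (2582264200458235491000%Z, (2, 3, 1, 11)%nat) :: (64983462290506855467900%Z, (2, 3, 2, 10)%nat) :: (982550146272121417155000%Z, (2, 3, 3, 9)%nat) :: (9942983519040886230056250%Z, (2, 3, 4, 8)%nat) :: (70949867300045825340150000%Z, (2, 3, 5, 7)%nat) :: (366046273696755118669125000%Z, (2, 3, 6, 6)%nat) :: (1375622804084259980328750000%Z, (2, 3, 7, 5)%nat) :: (3736657119868392993616406250%Z, (2, 3, 8, 4)%nat) :: (7153325470856462229234375000%Z, (2, 3, 9, 3)%nat) :: (9159477126682331607623437500%Z, (2, 3, 10, 2)%nat) :: (7043614945777526336859375000%Z, (2, 3, 11, 1)%nat) :: (2461217411925209021777343750%Z, (2, 3, 12, 0)%nat) :: (22278611098507365690%Z, (3, 2, 0, 12)%nat) :: (1245943683207807883200%Z,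 (3, 2, 1, 11)%nat) :: (31617818014990125570300%Z, (3, 2, 2, 10)%nat) :: (481543217343552661110000%Z, (3, 2, 3, 9)%nat) :: (4903195351698452378418750%Z, (3, 2, 4, 8)%nat) :: (35167729108984443397800000%Z, (3, 2, 5, 7)%nat) :: (182191263649815524267625000%Z, (3, 2, 6, 6)%nat) :: (686875905961344120532500000%Z, (3, 2, 7, 5)%nat) :: (1870068592981882021858593750%Z, (3, 2, 8, 4)%nat) :: (3585147063037490783250000000%Z, (3, 2, 9, 3)%nat) :: (4593598874308547890410937500%Z, (3, 2, 10, 2)%nat) :: (3532404878239702041843750000%Z, (3, 2, 11, 1)%nat) :: (1233738661788503867519531250%Z, (3, 2, 12, 0)%nat) :: (5390843243168640510%Z, (4, 1, 0, 12)%nat) :: (303176257370145264600%Z, (4, 1, 1, 11)%nat) :: (7737711073116070850100%Z, (4, 1, 2, 10)%nat) :: (118487052170629407045000%Z, (4, 1, 3, 9)%nat) :: (1212373749288150634556250%Z, (4, 1, 4, 8)%nat) :: (8732416085400864428550000%Z, (4, 1, 5, 7)%nat) :: (45397719926231018605875000%Z, (4, 1, 6, 6)%nat) :: (171622118325723259466250000%Z, (4, 1, 7, 5)%nat) :: (468178035925652887957031250%Z, (4, 1, 8, 4)%nat) :: (898658883401089252921875000%Z, (4, 1, 9, 3)%nat) :: (1152042575037230973782812500%Z, (4, 1, 10, 2)%nat) :: (885822568411009461890625000%Z, (4, 1, 11, 1)%nat) :: (309229794378462871933593750%Z, (4, 1, 12, 0)%nat) :: (530368419645127866%Z, (5, 0,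 0, 12)%nat) :: (29828175140800095840%Z, (5, 0, 1, 11)%nat) :: (762870401714760401700%Z, (5, 0, 2, 10)%nat) :: (11717219021433310440000%Z, (5, 0, 3, 9)%nat) :: (120286628466520588503750%Z, (5, 0, 4, 8)%nat) :: (869117728961342761560000%Z, (5, 0, 5, 7)%nat) :: (4530804809599139176875000%Z, (5, 0, 6, 6)%nat) :: (17166685386372351786000000%Z, (5, 0, 7, 5)%nat) :: (46907048127225640689843750%Z, (5, 0, 8, 4)%nat) :: (90128679413428929487500000%Z, (5, 0, 9, 3)%nat) :: (115586577499985752514062500%Z, (5, 0, 10, 2)%nat) :: (88861671718586996625000000%Z, (5, 0, 11, 1)%nat) :: (31003767395212149785156250%Z, (5, 0, 12, 0)%nat) :: nil).


Lemma K2_1_nonneg (x g : R) : (0) <= x <= (1/2) -> (11/5) <= g <= (9) -> 0 <= K2 x g.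
Proof.
  intros Hx Hg.
  assert (E : 769061353143284520000000000 * K2 x g = bsum K2_1_L (2 * x - (0)) ((1) - 2 * x) (5 * g - (11)) ((45) - 5 * g)) by (unfold K2, K2_1_L; cbn [bsum]; ring).
  assert (P : 0 <= bsum K2_1_L (2 * x - (0)) ((1) - 2 * x) (5 * g - (11)) ((45) - 5 * g)) by (apply bsum_nonneg; [vm_compute; reflexivity|lra..]).
  lra.
Qed.

Definition K2_2_L : list (Z * (nat * nat * nat * nat)) :=
  ((4242947357161022928%Z, (0, 5, 0, 12)%nat) :: (238625401126400766720%Z, (0, 5, 1, 11)%nat) :: (6102963213718083213600%Z, (0, 5, 2, 10)%nat) :: (93737752171466483520000%Z, (0, 5, 3, 9)%nat) :: (962293027732164708030000%Z, (0, 5, 4, 8)%nat) :: (6952941831690742092480000%Z, (0, 5, 5, 7)%nat) :: (36246438476793113415000000%Z, (0, 5, 6, 6)%nat) :: (137333483090978814288000000%Z, (0, 5, 7, 5)%nat) :: (375256385017805125518750000%Z, (0, 5, 8, 4)%nat) :: (721029435307431435900000000%Z, (0, 5, 9, 3)%nat) :: (924692619999886020112500000%Z, (0, 5, 10, 2)%nat) :: (710893373748695973000000000%Z, (0, 5, 11, 1)%nat) :: (248030139161697198281250000%Z, (0, 5, 12, 0)%nat) :: (10258732206033109920%Z, (1, 4, 0, 12)%nat) :: (576985478967424692000%Z, (1, 4, 1, 11)%nat) :: (14821379810421340701600%Z, (1, 4, 2, 10)%nat) :: (229084932603480998220000%Z, (1, 4, 3, 9)%nat) :: (2367702710838632772000000%Z,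 (1, 4, 4, 8)%nat) :: (17217399396077107979400000%Z, (1, 4, 5, 7)%nat) :: (90257408871024276189000000%Z, (1, 4, 6, 6)%nat) :: (343512649879448069295000000%Z, (1, 4, 7, 5)%nat) :: (941710743930926889562500000%Z, (1, 4, 8, 4)%nat) :: (1813085231201378757562500000%Z, (1, 4, 9, 3)%nat) :: (2327024349850221255712500000%Z, (1, 4, 10, 2)%nat) :: (1788410029471181949937500000%Z, (1, 4, 11, 1)%nat) :: (623306866198877499375000000%Z, (1, 4, 12, 0)%nat) :: (10643299897090375020%Z, (2, 3, 0, 12)%nat) :: (584728714876146667200%Z, (2, 3, 1, 11)%nat) :: (14847242583851423044200%Z, (2, 3, 2, 10)%nat) :: (228496606449995432340000%Z, (2, 3, 3, 9)%nat) :: (2361013844454995458162500%Z, (2, 3, 4, 8)%nat) :: (17198663381389837591200000%Z, (2, 3, 5, 7)%nat) :: (90382114797931653831750000%Z, (2, 3, 6, 6)%nat) :: (344824341652353335355000000%Z, (2, 3, 7, 5)%nat) :: (947132986648710056920312500%Z, (2, 3, 8, 4)%nat) :: (1825643218866046804125000000%Z, (2, 3, 9, 3)%nat) :: (2343759897720987862565625000%Z, (2, 3, 10, 2)%nat) :: (1800169023960836390812500000%Z, (2, 3, 11, 1)%nat) :: (626640389632085769960937500%Z, (2, 3, 12, 0)%nat) :: (5989639851850770060%Z, (3, 2, 0, 12)%nat) :: (313318338440217046200%Z, (3, 2, 1, 11)%nat) :: (7715510359121757218400%Z, (3, 2, 2, 10)%nat) :: (116687128392858371205000%Z, (3, 2,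 3, 9)%nat) :: (1194981870645609805687500%Z, (3, 2, 4, 8)%nat) :: (8671012888730031719550000%Z, (3, 2, 5, 7)%nat) :: (45515521726877172778500000%Z, (3, 2, 6, 6)%nat) :: (173671014299316075506250000%Z, (3, 2, 7, 5)%nat) :: (477249271334212239689062500%Z, (3, 2, 8, 4)%nat) :: (920161834447946123859375000%Z, (3, 2, 9, 3)%nat) :: (1180989615080280000600000000%Z, (3, 2, 10, 2)%nat) :: (906261628203770186390625000%Z, (3, 2, 11, 1)%nat) :: (315038844441611143476562500%Z, (3, 2, 12, 0)%nat) :: (1821154755757036590%Z, (4, 1, 0, 12)%nat) :: (88964821852694152200%Z, (4, 1, 1, 11)%nat) :: (2086618431212881156800%Z, (4, 1, 2, 10)%nat) :: (30583606979185082460000%Z, (4, 1, 3, 9)%nat) :: (307437000749729025243750%Z, (4, 1, 4, 8)%nat) :: (2208146181164965111950000%Z, (4, 1, 5, 7)%nat) :: (11531064870623116838250000%Z, (4, 1, 6, 6)%nat) :: (43892963853134784547500000%Z, (4, 1, 7, 5)%nat) :: (120487849420824480297656250%Z, (4, 1, 8, 4)%nat) :: (232150708026230843953125000%Z, (4, 1, 9, 3)%nat) :: (297715581764267270793750000%Z, (4, 1, 10, 2)%nat) :: (228185735821226790750000000%Z, (4, 1, 11, 1)%nat) :: (79202571374290712519531250%Z, (4, 1, 12, 0)%nat) :: (235453846176179004%Z, (5, 0, 0, 12)%nat) :: (10648741204062753660%Z, (5, 0, 1, 11)%nat) :: (234799441217402648400%Z, (5, 0, 2, 10)%nat) :: (3293988959235720817500%Z,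 (5, 0, 3, 9)%nat) :: (32191230450713127502500%Z, (5, 0, 4, 8)%nat) :: (227347367003535297915000%Z, (5, 0, 5, 7)%nat) :: (1176033397183752376500000%Z, (5, 0, 6, 6)%nat) :: (4453905954763999713375000%Z, (5, 0, 7, 5)%nat) :: (12193073925324529514062500%Z, (5, 0, 8, 4)%nat) :: (23454642359124403504687500%Z, (5, 0, 9, 3)%nat) :: (30037997438144714081250000%Z, (5, 0, 10, 2)%nat) :: (22988380070136056554687500%Z, (5, 0, 11, 1)%nat) :: (7965886004407947773437500%Z, (5, 0, 12, 0)%nat) :: nil).


Lemma K2_2_nonneg (x g : R) : (1/2) <= x <= (3/4) -> (11/5) <= g <= (9) -> 0 <= K2 x g.
Proof.
  intros Hx Hg.
  assert (E : 6152490825146276160000000000 * K2 x g = bsum K2_2_L (4 * x - (2)) ((3) - 4 * x) (5 * g - (11)) ((45) - 5 * g)) by (unfold K2, K2_2_L; cbn [bsum]; ring).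
  assert (P : 0 <= bsum K2_2_L (4 * x - (2)) ((3) - 4 * x) (5 * g - (11)) ((45) - 5 * g)) by (apply bsum_nonneg; [vm_compute; reflexivity|lra..]).
  lra.
Qed.

Definition K2_3_L : list (Z * (nat * nat * nat * nat)) :=
  ((235453846176179004%Z, (0, 5, 0, 12)%nat) :: (10648741204062753660%Z, (0, 5, 1, 11)%nat) :: (234799441217402648400%Z, (0, 5, 2, 10)%nat) :: (3293988959235720817500%Z, (0, 5, 3, 9)%nat) :: (32191230450713127502500%Z, (0, 5, 4, 8)%nat) :: (227347367003535297915000%Z, (0, 5, 5, 7)%nat) :: (1176033397183752376500000%Z, (0, 5, 6, 6)%nat) :: (4453905954763999713375000%Z, (0, 5, 7, 5)%nat) :: (12193073925324529514062500%Z, (0, 5, 8, 4)%nat) :: (23454642359124403504687500%Z, (0, 5, 9, 3)%nat) :: (30037997438144714081250000%Z, (0, 5, 10, 2)%nat) :: (22988380070136056554687500%Z, (0, 5, 11, 1)%nat) :: (7965886004407947773437500%Z, (0, 5, 12, 0)%nat) :: (533383706004753450%Z, (1, 4, 0, 12)%nat) :: (17522590187933384400%Z, (1, 4, 1, 11)%nat) :: (261375980961145327200%Z, (1, 4, 2, 10)%nat) :: (2356282613172125715000%Z, (1, 4, 3, 9)%nat) :: (14475303757402249781250%Z, (1, 4, 4, 8)%nat) :: (65327488870387867200000%Z, (1, 4, 5, 7)%nat) :: (229269101214406926750000%Z, (1, 4, 6, 6)%nat) :: (646095694505212586250000%Z, (1, 4, 7, 5)%nat) :: (1442889832420814842968750%Z,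 (1, 4, 8, 4)%nat) :: (2395715565013191093750000%Z, (1, 4, 9, 3)%nat) :: (2664392617179870018750000%Z, (1, 4, 10, 2)%nat) :: (1698064880133774796875000%Z, (1, 4, 11, 1)%nat) :: (456288669788765214843750%Z, (1, 4, 12, 0)%nat) :: (838555652841637500%Z, (2, 3, 0, 12)%nat) :: (27549411781173975000%Z, (2, 3, 1, 11)%nat) :: (414540558114813900000%Z, (2, 3, 2, 10)%nat) :: (3777830928806544225000%Z, (2, 3, 3, 9)%nat) :: (23135082676302703837500%Z, (2, 3, 4, 8)%nat) :: (99738119551722740550000%Z, (2, 3, 5, 7)%nat) :: (308338649242333132500000%Z, (2, 3, 6, 6)%nat) :: (683541664797787661250000%Z, (2, 3, 7, 5)%nat) :: (1069432980597577870312500%Z, (2, 3, 8, 4)%nat) :: (1141864603075512421875000%Z, (2, 3, 9, 3)%nat) :: (784858491930397500000000%Z, (2, 3, 10, 2)%nat) :: (310944439398122578125000%Z, (2, 3, 11, 1)%nat) :: (53713623603354257812500%Z, (2, 3, 12, 0)%nat) :: (423132769939687500%Z, (3, 2, 0, 12)%nat) :: (11924887625516250000%Z, (3, 2, 1, 11)%nat) :: (150932519162184375000%Z, (3, 2, 2, 10)%nat) :: (1138713145570481250000%Z, (3, 2, 3, 9)%nat) :: (5687797482216970312500%Z, (3, 2, 4, 8)%nat) :: (19694963314013872500000%Z, (3, 2, 5, 7)%nat) :: (48130443076768841250000%Z, (3, 2, 6, 6)%nat) :: (83088049428265612500000%Z, (3, 2, 7, 5)%nat) :: (100169282738215195312500%Z,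 (3, 2, 8, 4)%nat) :: (82183922041964531250000%Z, (3, 2, 9, 3)%nat) :: (43625469854768484375000%Z, (3, 2, 10, 2)%nat) :: (13491163226273906250000%Z, (3, 2, 11, 1)%nat) :: (1844387239812304687500%Z, (3, 2, 12, 0)%nat) :: (120566349750000000%Z, (4, 1, 0, 12)%nat) :: (2915677784250000000%Z, (4, 1, 1, 11)%nat) :: (30699283056750000000%Z, (4, 1, 2, 10)%nat) :: (187740922734750000000%Z, (4, 1, 3, 9)%nat) :: (744192831690000000000%Z, (4, 1, 4, 8)%nat) :: (2012098282078500000000%Z, (4, 1, 5, 7)%nat) :: (3806316584185500000000%Z, (4, 1, 6, 6)%nat) :: (5087942634505500000000%Z, (4, 1, 7, 5)%nat) :: (4785906212529750000000%Z, (4, 1, 8, 4)%nat) :: (3101003110301250000000%Z, (4, 1, 9, 3)%nat) :: (1318524654273750000000%Z, (4, 1, 10, 2)%nat) :: (331404705843750000000%Z, (4, 1, 11, 1)%nat) :: (37345201162500000000%Z, (4, 1, 12, 0)%nat) :: (14483266875000000%Z, (5, 0, 0, 12)%nat) :: (299973712500000000%Z, (5, 0, 1, 11)%nat) :: (2596164243750000000%Z, (5, 0, 2, 10)%nat) :: (12649406962500000000%Z, (5, 0, 3, 9)%nat) :: (39343717153125000000%Z, (5, 0, 4, 8)%nat) :: (83390218065000000000%Z, (5, 0, 5, 7)%nat) :: (124668456412500000000%Z, (5, 0, 6, 6)%nat) :: (133355324025000000000%Z, (5, 0, 7, 5)%nat) :: (101800099603125000000%Z, (5, 0, 8, 4)%nat)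 :: (54286995262500000000%Z, (5, 0, 9, 3)%nat) :: (19251199563750000000%Z, (5, 0, 10, 2)%nat) :: (4085209012500000000%Z, (5, 0, 11, 1)%nat) :: (393006796875000000%Z, (5, 0, 12, 0)%nat) :: nil).


Lemma K2_3_nonneg (x g : R) : (3/4) <= x <= (1) -> (11/5) <= g <= (9) -> 0 <= K2 x g.
Proof.
  intros Hx Hg.
  assert (E : 6152490825146276160000000000 * K2 x g = bsum K2_3_L (4 * x - (3)) ((4) - 4 * x) (5 * g - (11)) ((45) - 5 * g)) by (unfold K2, K2_3_L; cbn [bsum]; ring).
  assert (P : 0 <= bsum K2_3_L (4 * x - (3)) ((4) - 4 * x) (5 * g - (11)) ((45) - 5 * g)) by (apply bsum_nonneg; [vm_compute; reflexivity|lra..]).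
  lra.
Qed.

Definition K3 (x g : R) : R :=
  (-3679200) * x ^ 0 * g ^ 0 + (101301120) * x ^ 0 * g ^ 1 + (-1340056320) * x ^ 0 * g ^ 2 + (11281857280) * x ^ 0 * g ^ 3 + (-67436678400) * x ^ 0 * g ^ 4 + (301802938368) * x ^ 0 * g ^ 5 + (-1035677525760) * x ^ 0 * g ^ 6 + (2725309481472) * x ^ 0 * g ^ 7 + (-5307690704256) * x ^ 0 * g ^ 8 + (6629978804736) * x ^ 0 * g ^ 9 + (-996440160768) * x ^ 0 * g ^ 10 + (-19156387074048) * x ^ 0 * g ^ 11 + (56368007965696) * x ^ 0 * g ^ 12 + (-100416795279360) * x ^ 0 * g ^ 13 + (129928187805696) * x ^ 0 * g ^ 14 + (-127066786201600) * x ^ 0 * g ^ 15 + (92987901296640) * x ^ 0 * g ^ 16 + (-47476194017280) * x ^ 0 * g ^ 17 + (12825306726400) * x ^ 0 * g ^ 18 + (1861248614400) * x ^ 0 * g ^ 19 + (-2771641958400) * x ^ 0 * g ^ 20 + (647390822400) * x ^ 0 * g ^ 21 + (3237376) * x ^ 1 * g ^ 0 + (-127046016) * x ^ 1 * g ^ 1 + (2155046784) * x ^ 1 * g ^ 2 + (-21870265856) * x ^ 1 * g ^ 3 + (151158451968) * x ^ 1 * g ^ 4 + (-758235036672) * x ^ 1 * g ^ 5 + (2841659701760) * x ^ 1 * g ^ 6 + (-7959767985408) * x ^ 1 * g ^ 7 + (15925757985024) * x ^ 1 * g ^ 8 + (-18444133840384) * x ^ 1 * g ^ 9 + (-7968550230528)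 * x ^ 1 * g ^ 10 + (96994765959168) * x ^ 1 * g ^ 11 + (-263784992586752) * x ^ 1 * g ^ 12 + (467783955824640) * x ^ 1 * g ^ 13 + (-612979892797440) * x ^ 1 * g ^ 14 + (610548592640000) * x ^ 1 * g ^ 15 + (-455628687360000) * x ^ 1 * g ^ 16 + (237054384537600) * x ^ 1 * g ^ 17 + (-65482008166400) * x ^ 1 * g ^ 18 + (-8820699955200) * x ^ 1 * g ^ 19 + (13858209792000) * x ^ 1 * g ^ 20 + (-3236954112000) * x ^ 1 * g ^ 21 + (-2112600) * x ^ 2 * g ^ 0 + (80848992) * x ^ 2 * g ^ 1 + (-1478023680) * x ^ 2 * g ^ 2 + (16557641536) * x ^ 2 * g ^ 3 + (-125911866528) * x ^ 2 * g ^ 4 + (685098974208) * x ^ 2 * g ^ 5 + (-2726067765760) * x ^ 2 * g ^ 6 + (7838142953472) * x ^ 2 * g ^ 7 + (-14904451766016) * x ^ 2 * g ^ 8 + (10390108804096) * x ^ 2 * g ^ 9 + (43873192307712) * x ^ 2 * g ^ 10 + (-205267252764672) * x ^ 2 * g ^ 11 + (504567141378048) * x ^ 2 * g ^ 12 + (-878553589186560) * x ^ 2 * g ^ 13 + (1158601323479040) * x ^ 2 * g ^ 14 + (-1172540465152000) * x ^ 2 * g ^ 15 + (891974617497600) * x ^ 2 * g ^ 16 + (-473108781465600) * x ^ 2 * g ^ 17 + (133674965401600) * x ^ 2 * g ^ 18 + (16670313676800) * x ^ 2 * g ^ 19 + (-27716419584000) * x ^ 2 * g ^ 20 + (6473908224000)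 * x ^ 2 * g ^ 21 + (746496) * x ^ 3 * g ^ 0 + (-27579936) * x ^ 3 * g ^ 1 + (484835424) * x ^ 3 * g ^ 2 + (-5389397376) * x ^ 3 * g ^ 3 + (41516628288) * x ^ 3 * g ^ 4 + (-228137033472) * x ^ 3 * g ^ 5 + (883331390720) * x ^ 3 * g ^ 6 + (-2189678949888) * x ^ 3 * g ^ 7 + (1697396680704) * x ^ 3 * g ^ 8 + (12713345053696) * x ^ 3 * g ^ 9 + (-72056772830208) * x ^ 3 * g ^ 10 + (223023423479808) * x ^ 3 * g ^ 11 + (-492935643318272) * x ^ 3 * g ^ 12 + (832570078986240) * x ^ 3 * g ^ 13 + (-1097324987351040) * x ^ 3 * g ^ 14 + (1125127757824000) * x ^ 3 * g ^ 15 + (-872030741299200) * x ^ 3 * g ^ 16 + (471761977344000) * x ^ 3 * g ^ 17 + (-136385914470400) * x ^ 3 * g ^ 18 + (-15699227443200) * x ^ 3 * g ^ 19 + (27716419584000) * x ^ 3 * g ^ 20 + (-6473908224000) * x ^ 3 * g ^ 21 + (-33600) * x ^ 4 * g ^ 0 + (844032) * x ^ 4 * g ^ 1 + (-6629280) * x ^ 4 * g ^ 2 + (-35809984) * x ^ 4 * g ^ 3 + (1345216992) * x ^ 4 * g ^ 4 + (-16736566272) * x ^ 4 * g ^ 5 + (139180437760) * x ^ 4 * g ^ 6 + (-868400214528) * x ^ 4 * g ^ 7 + (4213601852544) * x ^ 4 * g ^ 8 + (-16164550280704) * x ^ 4 * g ^ 9 + (49576252780032) * x ^ 4 * g ^ 10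 + (-122562880376832) * x ^ 4 * g ^ 11 + (245472020835328) * x ^ 4 * g ^ 12 + (-398505226076160) * x ^ 4 * g ^ 13 + (521124636426240) * x ^ 4 * g ^ 14 + (-539494559744000) * x ^ 4 * g ^ 15 + (425712873062400) * x ^ 4 * g ^ 16 + (-235034178355200) * x ^ 4 * g ^ 17 + (69548431769600) * x ^ 4 * g ^ 18 + (7364070604800) * x ^ 4 * g ^ 19 + (-13858209792000) * x ^ 4 * g ^ 20 + (3236954112000) * x ^ 4 * g ^ 21 + (-38400) * x ^ 5 * g ^ 0 + (1512960) * x ^ 5 * g ^ 1 + (-28604160) * x ^ 5 * g ^ 2 + (345550080) * x ^ 5 * g ^ 3 + (-2996670720) * x ^ 5 * g ^ 4 + (19872080640) * x ^ 5 * g ^ 5 + (-104806444800) * x ^ 5 * g ^ 6 + (451311901440) * x ^ 5 * g ^ 7 + (-1615604947200) * x ^ 5 * g ^ 8 + (4866520834560) * x ^ 5 * g ^ 9 + (-12425333629440) * x ^ 5 * g ^ 10 + (26970498379776) * x ^ 5 * g ^ 11 + (-49686534274048) * x ^ 5 * g ^ 12 + (77121575731200) * x ^ 5 * g ^ 13 + (-99349267562496) * x ^ 5 * g ^ 14 + (103425460633600) * x ^ 5 * g ^ 15 + (-83015963197440) * x ^ 5 * g ^ 16 + (46802791956480) * x ^ 5 * g ^ 17 + (-14180781260800) * x ^ 5 * g ^ 18 + (-1375705497600) * x ^ 5 * g ^ 19 + (2771641958400) * x ^ 5 * g ^ 20 + (-647390822400) * x ^ 5 * g ^ 21.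

Definition K3_0_L : list (Z * (nat * nat * nat * nat)) :=
  ((105891171206620845999686574330108984%Z, (0, 5, 0, 21)%nat) :: (32777122656977738343578067573821310360%Z, (0, 5, 1, 20)%nat) :: (2432178832471671227868969711396404310000%Z, (0, 5, 2, 19)%nat) :: (94749178789601145661944655308201409590000%Z, (0, 5, 3, 18)%nat) :: (2397673361769020845993988049656807475507000%Z, (0, 5, 4, 17)%nat) :: (43483194969191364150668194496360413561575000%Z, (0, 5, 5, 16)%nat) :: (597261001128667273083382109356027712682600000%Z, (0, 5, 6, 15)%nat) :: (6430088579410840671408348316506982778908200000%Z, (0, 5, 7, 14)%nat) :: (55487311934120560953984720088884758322759750000%Z, (0, 5, 8, 13)%nat) :: (389483258346947671517600948365642198972758750000%Z, (0, 5, 9, 12)%nat) :: (2244658165580852079527318625085360198802062500000%Z, (0, 5, 10, 11)%nat) :: (10675798794459744838284220485292810946516062500000%Z, (0, 5, 11, 10)%nat) :: (41965524954583944263638381498561729387346718750000%Z, (0, 5, 12, 9)%nat) :: (136076079156398917021767986483113402878677343750000%Z, (0, 5, 13, 8)%nat) :: (361932693240340198159752043960991871119015625000000%Z, (0, 5, 14, 7)%nat) :: (781816017963668961045343885623249705871640625000000%Z, (0, 5, 15, 6)%nat) :: (1350260551978054368705207455976750035796240234375000%Z, (0, 5, 16, 5)%nat) :: (1820563902010625029041105458354218112883544921875000%Z, (0, 5, 17, 4)%nat) :: (1846619096101381620009775184216291064411621093750000%Z, (0, 5, 18, 3)%nat) :: (1325380663311681430603717222214163697888183593750000%Z, (0,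 5, 19, 2)%nat) :: (600083258158437037710310597274334207366943359375000%Z, (0, 5, 20, 1)%nat) :: (128876253431779117126037263143592771453857421875000%Z, (0, 5, 21, 0)%nat) :: (397134212591983791603488527279980600%Z, (1, 4, 0, 21)%nat) :: (34092208629987912260446940190236050200%Z, (1, 4, 1, 20)%nat) :: (1390684684659969740040852972818569743600%Z, (1, 4, 2, 19)%nat) :: (35839020822706329577122614626788463734000%Z, (1, 4, 3, 18)%nat) :: (654359548652345878348824883239684454035000%Z, (1, 4, 4, 17)%nat) :: (8997242477310419752100528896456742217975000%Z, (1, 4, 5, 16)%nat) :: (96661177062564985893506300964938381409000000%Z, (1, 4, 6, 15)%nat) :: (830901522734745272385248376175844723625000000%Z, (1, 4, 7, 14)%nat) :: (5804511535863349855743454979152195904343750000%Z, (1, 4, 8, 13)%nat) :: (33283582347501143324470456787786953271538750000%Z, (1, 4, 9, 12)%nat) :: (157555680624418152927720736711934222095462500000%Z, (1, 4, 10, 11)%nat) :: (617083966372469654440096573791700025366062500000%Z, (1, 4, 11, 10)%nat) :: (1997716021748807277707334488643995481791718750000%Z, (1, 4, 12, 9)%nat) :: (5323166212483970681065156684365183167589843750000%Z, (1, 4, 13, 8)%nat) :: (11584004407317233599962166180131176317265625000000%Z, (1, 4, 14, 7)%nat) :: (20337761754426012207162478357147210081640625000000%Z, (1, 4, 15, 6)%nat) :: (28292956196823306545493610436141817546240234375000%Z, (1, 4, 16, 5)%nat) :: (30373151895830068403942278430642993332763671875000%Z, (1, 4, 17, 4)%nat) :: (24175037976338414696187794130247703356933593750000%Z,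 (1, 4, 18, 3)%nat) :: (13373965300454694398797226611575471716308593750000%Z, (1, 4, 19, 2)%nat) :: (4567056120408238613863027008378878265380859375000%Z, (1, 4, 20, 1)%nat) :: (720975585170933696441568061594482879638671875000%Z, (1, 4, 21, 0)%nat) :: (38899132009237876684482617311050000%Z, (2, 3, 0, 21)%nat) :: (3101348367304316722483664764986450000%Z, (2, 3, 1, 20)%nat) :: (116908477379629082982712270175901300000%Z, (2, 3, 2, 19)%nat) :: (2769742943797213458291726834607163700000%Z, (2, 3, 3, 18)%nat) :: (46239559186212866796738334078010719050000%Z, (2, 3, 4, 17)%nat) :: (578042255049649311930526533386172233250000%Z, (2, 3, 5, 16)%nat) :: (5612687710081015324155451006796816334000000%Z, (2, 3, 6, 15)%nat) :: (43332468920226870475650997465241829342000000%Z, (2, 3, 7, 14)%nat) :: (270081228160684208318400268380571126972500000%Z, (2, 3, 8, 13)%nat) :: (1372044764608227290308594565695420641262500000%Z, (2, 3, 9, 12)%nat) :: (5711269407264103281976119546100289230875000000%Z, (2, 3, 10, 11)%nat) :: (19513839732379955846842571191887731206875000000%Z, (2, 3, 11, 10)%nat) :: (54644471233243568565279706612734415814062500000%Z, (2, 3, 12, 9)%nat) :: (124818367857744946310632797908241539882812500000%Z, (2, 3, 13, 8)%nat) :: (230632217465988424276651544053033031718750000000%Z, (2, 3, 14, 7)%nat) :: (340391768525603845668279311070198405468750000000%Z, (2, 3, 15, 6)%nat) :: (394006831897880056611588913231129094238281250000%Z, (2, 3, 16, 5)%nat) :: (348335853071466240517136345386138322753906250000%Z,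 (2, 3, 17, 4)%nat) :: (226097458448861422497397690891740747070312500000%Z, (2, 3, 18, 3)%nat) :: (101123286639867708737585462413673950195312500000%Z, (2, 3, 19, 2)%nat) :: (27734130985320235044325215244602355957031250000%Z, (2, 3, 20, 1)%nat) :: (3503045835244645170276423822413635253906250000%Z, (2, 3, 21, 0)%nat) :: (2494837226239437205755541526250000%Z, (3, 2, 0, 21)%nat) :: (179143764821214736533310563311250000%Z, (3, 2, 1, 20)%nat) :: (6059182053655100238127855331872500000%Z, (3, 2, 2, 19)%nat) :: (128285693858172236665023738933712500000%Z, (3, 2, 3, 18)%nat) :: (1905704721795367585823618320334606250000%Z, (3, 2, 4, 17)%nat) :: (21101280956577887270684845130097401250000%Z, (3, 2, 5, 16)%nat) :: (180591775349057725599087152773537230000000%Z, (3, 2, 6, 15)%nat) :: (1222509897210609908646660353404675710000000%Z, (3, 2, 7, 14)%nat) :: (6644214066219022245322823854980309412500000%Z, (3, 2, 8, 13)%nat) :: (29261559336938965601739728758379847262500000%Z, (3, 2, 9, 12)%nat) :: (104953872823577456101981706979821410875000000%Z, (3, 2, 10, 11)%nat) :: (307055565978954740121408454412088316875000000%Z, (3, 2, 11, 10)%nat) :: (731578523938776213914207272817719289062500000%Z, (3, 2, 12, 9)%nat) :: (1412840910509378778095322330099539882812500000%Z, (3, 2, 13, 8)%nat) :: (2193893695403685044927166111553601718750000000%Z, (3, 2, 14, 7)%nat) :: (2706322122635760389463610566922117968750000000%Z, (3, 2, 15, 6)%nat) :: (2606284007988001085484856578214727050781250000%Z, (3, 2,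 16, 5)%nat) :: (1910684872210781362432354684124963378906250000%Z, (3, 2, 17, 4)%nat) :: (1026578426599816214761694784144653320312500000%Z, (3, 2, 18, 3)%nat) :: (380053707848429885033920777925903320312500000%Z, (3, 2, 19, 2)%nat) :: (86429692322219692149133546277160644531250000%Z, (3, 2, 20, 1)%nat) :: (9082458520793542021162120948791503906250000%Z, (3, 2, 21, 0)%nat) :: (85649658414271143566889571875000%Z, (4, 1, 0, 21)%nat) :: (5469629165794483694113680309375000%Z, (4, 1, 1, 20)%nat) :: (163879579631488312031208949293750000%Z, (4, 1, 2, 19)%nat) :: (3060755185972582126694365761993750000%Z, (4, 1, 3, 18)%nat) :: (39933384481760853894357765287671875000%Z, (4, 1, 4, 17)%nat) :: (386565211211913108884549154669384375000%Z, (4, 1, 5, 16)%nat) :: (2878551578389123123582024968681825000000%Z, (4, 1, 6, 15)%nat) :: (16871937166360760312814651889320825000000%Z, (4, 1, 7, 14)%nat) :: (79002927978009936747147647500011243750000%Z, (4, 1, 8, 13)%nat) :: (298299955919394740907226299057130218750000%Z, (4, 1, 9, 12)%nat) :: (912966827859358267187127166738979062500000%Z, (4, 1, 10, 11)%nat) :: (2269166854926712414327973216314889062500000%Z, (4, 1, 11, 10)%nat) :: (4575394506664450285296376095152149218750000%Z, (4, 1, 12, 9)%nat) :: (7454721558215777435371551115751589843750000%Z, (4, 1, 13, 8)%nat) :: (9745332759288549070217569972522265625000000%Z, (4, 1, 14, 7)%nat) :: (10110508182516357247519953587787890625000000%Z, (4, 1, 15, 6)%nat) :: (8191069214850619864243381076868896484375000%Z,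 (4, 1, 16, 5)%nat) :: (5059347529655016572568234053965576171875000%Z, (4, 1, 17, 4)%nat) :: (2296443516180518002454591587185058593750000%Z, (4, 1, 18, 3)%nat) :: (720903143635303861412212624255371093750000%Z, (4, 1, 19, 2)%nat) :: (139643429024967980955521836761474609375000%Z, (4, 1, 20, 1)%nat) :: (12563037303623497076314453582763671875000%Z, (4, 1, 21, 0)%nat) :: (1227804562287588148478671875000%Z, (5, 0, 0, 21)%nat) :: (68635616926430865122068359375000%Z, (5, 0, 1, 20)%nat) :: (1793185411403874505384483593750000%Z, (5, 0, 2, 19)%nat) :: (29087435517948663854979733593750000%Z, (5, 0, 3, 18)%nat) :: (328266209194567650065369288671875000%Z, (5, 0, 4, 17)%nat) :: (2737549847176177539331676482734375000%Z, (5, 0, 5, 16)%nat) :: (17491938363866121585348852740625000000%Z, (5, 0, 6, 15)%nat) :: (87643441305551105091916239065625000000%Z, (5, 0, 7, 14)%nat) :: (349627886772166528038413696889843750000%Z, (5, 0, 8, 13)%nat) :: (1121409332023854309639415211786718750000%Z, (5, 0, 9, 12)%nat) :: (2909035863547819425136663160504062500000%Z, (5, 0, 10, 11)%nat) :: (6119885790121179866027780959889062500000%Z, (5, 0, 11, 10)%nat) :: (10440183480541483242069570372949218750000%Z, (5, 0, 12, 9)%nat) :: (14400761675708444536571836084277343750000%Z, (5, 0, 13, 8)%nat) :: (15964302801565617961881632786015625000000%Z, (5, 0, 14, 7)%nat) :: (14082289563335473483921450025390625000000%Z, (5, 0, 15, 6)%nat) :: (9734258823696590165684645236083984375000%Z,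 (5, 0, 16, 5)%nat) :: (5151450326166073773841210125732421875000%Z, (5, 0, 17, 4)%nat) :: (2012764445529330438847491833496093750000%Z, (5, 0, 18, 3)%nat) :: (546626639724812197874610974121093750000%Z, (5, 0, 19, 2)%nat) :: (92080062387755426398834808349609375000%Z, (5, 0, 20, 1)%nat) :: (7241888723339517852488250732421875000%Z, (5, 0, 21, 0)%nat) :: nil).


Lemma K3_0_nonneg (x g : R) : (-1) <= x <= (1) -> (11/5) <= g <= (9) -> 0 <= K3 x g.
Proof.
  intros Hx Hg.
  assert (E : 458726222344673660739648991461120000000000000000000 * K3 x g = bsum K3_0_L (1 * x - (-1)) ((1) - 1 * x) (5 * g - (11)) ((45) - 5 * g)) by (unfold K3, K3_0_L; cbn [bsum]; ring).
  assert (P : 0 <= bsum K3_0_L (1 * x - (-1)) ((1) - 1 * x) (5 * g - (11)) ((45) - 5 * g)) by (apply bsum_nonneg; [vm_compute; reflexivity|lra..]).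
  lra.
Qed.

Definition K4 (x g : R) : R :=
  (-114485280) * x ^ 0 * g ^ 0 + (2579915520) * x ^ 0 * g ^ 1 + (-28021150080) * x ^ 0 * g ^ 2 + (193622526720) * x ^ 0 * g ^ 3 + (-948642912000) * x ^ 0 * g ^ 4 + (3483031265280) * x ^ 0 * g ^ 5 + (-9887226021120) * x ^ 0 * g ^ 6 + (22083510919680) * x ^ 0 * g ^ 7 + (-39126917934720) * x ^ 0 * g ^ 8 + (55006355712000) * x ^ 0 * g ^ 9 + (-60874019942400) * x ^ 0 * g ^ 10 + (52063751577600) * x ^ 0 * g ^ 11 + (-33253196928000) * x ^ 0 * g ^ 12 + (14902949376000) * x ^ 0 * g ^ 13 + (-4148928000000) * x ^ 0 * g ^ 14 + (531062784000) * x ^ 0 * g ^ 15 + (231288960) * x ^ 1 * g ^ 0 + (-6746947200) * x ^ 1 * g ^ 1 + (86788275840) * x ^ 1 * g ^ 2 + (-674741276160) * x ^ 1 * g ^ 3 + (3601471910400) * x ^ 1 * g ^ 4 + (-14101073925120) * x ^ 1 * g ^ 5 + (42065008957440) * x ^ 1 * g ^ 6 + (-97714070496000) * x ^ 1 * g ^ 7 + (178687236268800) * x ^ 1 * g ^ 8 + (-257753073984000) * x ^ 1 * g ^ 9 + (291273909696000) * x ^ 1 * g ^ 10 + (-253310625792000) * x ^ 1 * g ^ 11 + (163876202112000) * x ^ 1 * g ^ 12 + (-74116449792000) * x ^ 1 * g ^ 13 + (20744640000000) * x ^ 1 * g ^ 14 + (-2655313920000) * x ^ 1 * g ^ 15 +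 (-467299560) * x ^ 2 * g ^ 0 + (11998848960) * x ^ 2 * g ^ 1 + (-147306690720) * x ^ 2 * g ^ 2 + (1134651766080) * x ^ 2 * g ^ 3 + (-6108807650400) * x ^ 2 * g ^ 4 + (24333032868480) * x ^ 2 * g ^ 5 + (-74126862284160) * x ^ 2 * g ^ 6 + (176054425344000) * x ^ 2 * g ^ 7 + (-329068924934400) * x ^ 2 * g ^ 8 + (484548427776000) * x ^ 2 * g ^ 9 + (-557813491200000) * x ^ 2 * g ^ 10 + (492889485312000) * x ^ 2 * g ^ 11 + (-322972839168000) * x ^ 2 * g ^ 12 + (147436305408000) * x ^ 2 * g ^ 13 + (-41489280000000) * x ^ 2 * g ^ 14 + (5310627840000) * x ^ 2 * g ^ 15 + (536578560) * x ^ 3 * g ^ 0 + (-12993089760) * x ^ 3 * g ^ 1 + (149871244320) * x ^ 3 * g ^ 2 + (-1097909527680) * x ^ 3 * g ^ 3 + (5715909460800) * x ^ 3 * g ^ 4 + (-22368160120320) * x ^ 3 * g ^ 5 + (67819143651840) * x ^ 3 * g ^ 6 + (-161853356044800) * x ^ 3 * g ^ 7 + (305914528281600) * x ^ 3 * g ^ 8 + (-457083709824000) * x ^ 3 * g ^ 9 + (534537214848000) * x ^ 3 * g ^ 10 + (-479442216960000) * x ^ 3 * g ^ 11 + (318193274112000) * x ^ 3 * g ^ 12 + (-146639711232000) * x ^ 3 * g ^ 13 + (41489280000000) * x ^ 3 * g ^ 14 + (-5310627840000) * x ^ 3 * g ^ 15 + (-309785280) * x ^ 4 * g ^ 0 +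 (7240343040) * x ^ 4 * g ^ 1 + (-80577836640) * x ^ 4 * g ^ 2 + (568143696960) * x ^ 4 * g ^ 3 + (-2850948828000) * x ^ 4 * g ^ 4 + (10822379057280) * x ^ 4 * g ^ 5 + (-32147593887360) * x ^ 4 * g ^ 6 + (76003500787200) * x ^ 4 * g ^ 7 + (-143736637161600) * x ^ 4 * g ^ 8 + (216502653696000) * x ^ 4 * g ^ 9 + (-256359495168000) * x ^ 4 * g ^ 10 + (233139723264000) * x ^ 4 * g ^ 11 + (-156706854528000) * x ^ 4 * g ^ 12 + (72921558528000) * x ^ 4 * g ^ 13 + (-20744640000000) * x ^ 4 * g ^ 14 + (2655313920000) * x ^ 4 * g ^ 15 + (70694400) * x ^ 5 * g ^ 0 + (-1612316160) * x ^ 5 * g ^ 1 + (17505089280) * x ^ 5 * g ^ 2 + (-120309745920) * x ^ 5 * g ^ 3 + (587313619200) * x ^ 5 * g ^ 4 + (-2167431033600) * x ^ 5 * g ^ 5 + (6277529583360) * x ^ 5 * g ^ 6 + (-14574010510080) * x ^ 5 * g ^ 7 + (27330715480320) * x ^ 5 * g ^ 8 + (-41220653376000) * x ^ 5 * g ^ 9 + (49235881766400) * x ^ 5 * g ^ 10 + (-45340117401600) * x ^ 5 * g ^ 11 + (30863414400000) * x ^ 5 * g ^ 12 + (-14504652288000) * x ^ 5 * g ^ 13 + (4148928000000) * x ^ 5 * g ^ 14 + (-531062784000) * x ^ 5 * g ^ 15.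

Definition K4_0_L : list (Z * (nat * nat * nat * nat)) :=
  ((262157424711961303593940872%Z, (0, 5, 0, 15)%nat) :: (33977352401208738740491673400%Z, (0, 5, 1, 14)%nat) :: (1632603480529739619229179251400%Z, (0, 5, 2, 13)%nat) :: (43860806445289816478353444587000%Z, (0, 5, 3, 12)%nat) :: (770203524472519244862446404713000%Z, (0, 5, 4, 11)%nat) :: (9559724930603107374209724003375000%Z, (0, 5, 5, 10)%nat) :: (87628046877717067626938740932225000%Z, (0, 5, 6, 9)%nat) :: (608223919296382781472477847625175000%Z, (0, 5, 7, 8)%nat) :: (3237626591062265012769232951251375000%Z, (0, 5, 8, 7)%nat) :: (13258295949015653252546746817525625000%Z, (0, 5, 9, 6)%nat) :: (41520543730263856064651337452334375000%Z, (0, 5, 10, 5)%nat) :: (97816256433617335989698085027890625000%Z, (0, 5, 11, 4)%nat) :: (168021550405630367221268537341171875000%Z, (0, 5, 12, 3)%nat) :: (198865848443396140563546012851953125000%Z, (0, 5, 13, 2)%nat) :: (145134834079855303083508528341796875000%Z, (0, 5, 14, 1)%nat) :: (49268225731371148359496672236328125000%Z, (0, 5, 15, 0)%nat) :: (340589552269747306199473800%Z, (1, 4, 0, 15)%nat) :: (21958032865773909196648956600%Z, (1, 4, 1, 14)%nat) :: (657804468055167667950797881800%Z, (1, 4, 2, 13)%nat) :: (12135175682407193663202894939000%Z, (1, 4, 3, 12)%nat) :: (154006065271630347594318565065000%Z, (1, 4, 4, 11)%nat) :: (1422371912449676004864496223775000%Z, (1, 4, 5, 10)%nat) :: (9861199362872210444420686982625000%Z,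 (1, 4, 6, 9)%nat) :: (52161829695798741827854332762375000%Z, (1, 4, 7, 8)%nat) :: (211766335574486950751525055399375000%Z, (1, 4, 8, 7)%nat) :: (657984078861521795107380126095625000%Z, (1, 4, 9, 6)%nat) :: (1546380567696117526575076133634375000%Z, (1, 4, 10, 5)%nat) :: (2687189308861199197098266739140625000%Z, (1, 4, 11, 4)%nat) :: (3322445622529697545077813413671875000%Z, (1, 4, 12, 3)%nat) :: (2738310851167479359824757783203125000%Z, (1, 4, 13, 2)%nat) :: (1332890224518567228098317154296875000%Z, (1, 4, 14, 1)%nat) :: (286418016259906655901466142578125000%Z, (1, 4, 15, 0)%nat) :: (35475753018614748990150000%Z, (2, 3, 0, 15)%nat) :: (2050354659739229621627850000%Z, (2, 3, 1, 14)%nat) :: (54532047547872494397948150000%Z, (2, 3, 2, 13)%nat) :: (883844654635485326483549850000%Z, (2, 3, 3, 12)%nat) :: (9743292833633198956623657150000%Z, (2, 3, 4, 11)%nat) :: (77200063795629781130153279250000%Z, (2, 3, 5, 10)%nat) :: (452924671215018754463118156750000%Z, (2, 3, 6, 9)%nat) :: (1996985265069081244604241845250000%Z, (2, 3, 7, 8)%nat) :: (6645951861002113199662103231250000%Z, (2, 3, 8, 7)%nat) :: (16620972009556527158612435118750000%Z, (2, 3, 9, 6)%nat) :: (30830749208175078984483693281250000%Z, (2, 3, 10, 5)%nat) :: (41443997895942591678905895468750000%Z, (2, 3, 11, 4)%nat) :: (38901071203858865133872896406250000%Z, (2, 3, 12, 3)%nat) :: (23994443127404013797916977343750000%Z, (2,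 3, 13, 2)%nat) :: (8686397104921032882388910156250000%Z, (2, 3, 14, 1)%nat) :: (1392407652751904159210683593750000%Z, (2, 3, 15, 0)%nat) :: (2344566504714487803750000%Z, (3, 2, 0, 15)%nat) :: (116514648815937067946250000%Z, (3, 2, 1, 14)%nat) :: (2640931064630692757673750000%Z, (3, 2, 2, 13)%nat) :: (36121457255791023822956250000%Z, (3, 2, 3, 12)%nat) :: (332419730704597999832118750000%Z, (3, 2, 4, 11)%nat) :: (2173106707573609092025991250000%Z, (3, 2, 5, 10)%nat) :: (10387228562533935119866608750000%Z, (3, 2, 6, 9)%nat) :: (36826741504656408233740061250000%Z, (3, 2, 7, 8)%nat) :: (97278110500868173641445931250000%Z, (3, 2, 8, 7)%nat) :: (190831325212797921933650118750000%Z, (3, 2, 9, 6)%nat) :: (275134868323186774077706781250000%Z, (3, 2, 10, 5)%nat) :: (286098040589146368995130468750000%Z, (3, 2, 11, 4)%nat) :: (207862749066971831630453906250000%Z, (3, 2, 12, 3)%nat) :: (99815498483550284994152343750000%Z, (3, 2, 13, 2)%nat) :: (28405794709793505195597656250000%Z, (3, 2, 14, 1)%nat) :: (3622863700060752862558593750000%Z, (3, 2, 15, 0)%nat) :: (82136172445605403125000%Z, (4, 1, 0, 15)%nat) :: (3419133972248391271875000%Z, (4, 1, 1, 14)%nat) :: (64265083849851687928125000%Z, (4, 1, 2, 13)%nat) :: (721129657773396743746875000%Z, (4, 1, 3, 12)%nat) :: (5384682592277514166265625000%Z, (4, 1, 4, 11)%nat) :: (28251243189294150960309375000%Z, (4,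 1, 5, 10)%nat) :: (107300763057023848928240625000%Z, (4, 1, 6, 9)%nat) :: (299886054469832606735334375000%Z, (4, 1, 7, 8)%nat) :: (621526619562774465474309375000%Z, (4, 1, 8, 7)%nat) :: (956201708782706664168515625000%Z, (4, 1, 9, 6)%nat) :: (1085488050401869944438984375000%Z, (4, 1, 10, 5)%nat) :: (895582740086366698381640625000%Z, (4, 1, 11, 4)%nat) :: (521560359330450650757421875000%Z, (4, 1, 12, 3)%nat) :: (203083666757963509095703125000%Z, (4, 1, 13, 2)%nat) :: (47428116877103413623046875000%Z, (4, 1, 14, 1)%nat) :: (5022976963612860205078125000%Z, (4, 1, 15, 0)%nat) :: (1194743349878203125000%Z, (5, 0, 0, 15)%nat) :: (40117552798369921875000%Z, (5, 0, 1, 14)%nat) :: (602208933759636328125000%Z, (5, 0, 2, 13)%nat) :: (5346458232685491796875000%Z, (5, 0, 3, 12)%nat) :: (31340680464725272265625000%Z, (5, 0, 4, 11)%nat) :: (128445708393776758359375000%Z, (5, 0, 5, 10)%nat) :: (380696732166742006640625000%Z, (5, 0, 6, 9)%nat) :: (833187223432688733984375000%Z, (5, 0, 7, 8)%nat) :: (1362475541055581687109375000%Z, (5, 0, 8, 7)%nat) :: (1671177448032849397265625000%Z, (5, 0, 9, 6)%nat) :: (1530778274740534428984375000%Z, (5, 0, 10, 5)%nat) :: (1031937710323029275390625000%Z, (5, 0, 11, 4)%nat) :: (497153095526147607421875000%Z, (5, 0, 12, 3)%nat) :: (162041867670544189453125000%Z, (5, 0, 13, 2)%nat) :: (32029121189016123046875000%Z,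 (5, 0, 14, 1)%nat) :: (2900315181484423828125000%Z, (5, 0, 15, 0)%nat) :: nil).


Lemma K4_0_nonneg (x g : R) : (-1) <= x <= (1) -> (11/5) <= g <= (9) -> 0 <= K4 x g.
Proof.
  intros Hx Hg.
  assert (E : 104787583069671336550144000000000000 * K4 x g = bsum K4_0_L (1 * x - (-1)) ((1) - 1 * x) (5 * g - (11)) ((45) - 5 * g)) by (unfold K4, K4_0_L; cbn [bsum]; ring).
  assert (P : 0 <= bsum K4_0_L (1 * x - (-1)) ((1) - 1 * x) (5 * g - (11)) ((45) - 5 * g)) by (apply bsum_nonneg; [vm_compute; reflexivity|lra..]).
  lra.
Qed.

Definition KD (x g : R) : R :=
  (-32) * x ^ 0 * g ^ 0 + (252) * x ^ 0 * g ^ 1 + (-840) * x ^ 0 * g ^ 2 + (1400) * x ^ 0 * g ^ 3 + (-1050) * x ^ 0 * g ^ 4 + (420) * x ^ 0 * g ^ 6.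

Definition KD_0_L : list (Z * (nat * nat * nat * nat)) :=
  ((107458374%Z, (0, 0, 0, 6)%nat) :: (2812971180%Z, (0, 0, 1, 5)%nat) :: (30586181250%Z, (0, 0, 2, 4)%nat) :: (176547485000%Z, (0, 0, 3, 3)%nat) :: (569365226250%Z, (0, 0, 4, 2)%nat) :: (969906607500%Z, (0, 0, 5, 1)%nat) :: (678971768750%Z, (0, 0, 6, 0)%nat) :: nil).


Lemma KD_0_nonneg (x g : R) : (-1) <= x <= (1) -> (11/5) <= g <= (9) -> 0 <= KD x g.
Proof.
  intros Hx Hg.
  assert (E : 4827513800000 * KD x g = bsum KD_0_L (1 * x - (-1)) ((1) - 1 * x) (5 * g - (11)) ((45) - 5 * g)) by (unfold KD, KD_0_L; cbn [bsum]; ring).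
  assert (P : 0 <= bsum KD_0_L (1 * x - (-1)) ((1) - 1 * x) (5 * g - (11)) ((45) - 5 * g)) by (apply bsum_nonneg; [vm_compute; reflexivity|lra..]).
  lra.
Qed.

Definition KC (x g : R) : R :=
  (-2) * x ^ 0 * g ^ 0 + (12) * x ^ 0 * g ^ 1 + (-60) * x ^ 0 * g ^ 2 + (160) * x ^ 0 * g ^ 3 + (-240) * x ^ 0 * g ^ 4 + (192) * x ^ 0 * g ^ 5 + (64) * x ^ 0 * g ^ 6.

Definition KC_0_L : list (Z * (nat * nat * nat * nat)) :=
  ((202606614%Z, (0, 0, 0, 6)%nat) :: (4841701740%Z, (0, 0, 1, 5)%nat) :: (47872385250%Z, (0, 0, 2, 4)%nat) :: (250151445000%Z, (0, 0, 3, 3)%nat) :: (726367256250%Z, (0, 0, 4, 2)%nat) :: (1106314087500%Z, (0, 0, 5, 1)%nat) :: (685732468750%Z, (0, 0, 6, 0)%nat) :: nil).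


Lemma KC_0_nonneg (x g : R) : (-1) <= x <= (1) -> (11/5) <= g <= (9) -> 0 <= KC x g.
Proof.
  intros Hx Hg.
  assert (E : 24137569000000 * KC x g = bsum KC_0_L (1 * x - (-1)) ((1) - 1 * x) (5 * g - (11)) ((45) - 5 * g)) by (unfold KC, KC_0_L; cbn [bsum]; ring).
  assert (P : 0 <= bsum KC_0_L (1 * x - (-1)) ((1) - 1 * x) (5 * g - (11)) ((45) - 5 * g)) by (apply bsum_nonneg; [vm_compute; reflexivity|lra..]).
  lra.
Qed.


Lemma K2_nonneg (x g : R) : -1 <= x <= 1 -> 11/5 <= g <= 9 -> 0 <= K2 x g.
Proof.
  intros Hx Hg.
  destruct (Rle_lt_dec x 0).
  { apply K2_0_nonneg; lra. }
  destruct (Rle_lt_dec x (1/2)).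
  { apply K2_1_nonneg; lra. }
  destruct (Rle_lt_dec x (3/4)).
  { apply K2_2_nonneg; lra. }
  apply K2_3_nonneg; lra.
Qed.

Ltac unfold_polys := unfold XA, YA, XB, YB, XC, YC, Dg, Cp; rewrite ?sum7, ?sum8; cbn [ai bi ci Tc Uc].

Lemma E2 (x g : R) : XA x g ^ 2 + (1 - x ^ 2) * YA x g ^ 2 - 420 ^ 2 = (1 - x) * K2 x g.
Proof. unfold_polys. unfold K2. ring. Qed.

Lemma E3 (x g : R) : XC (-1) g ^ 2 * (XA x g ^ 2 + (1 - x ^ 2) * YA x g ^ 2)
  - XA (-1) g ^ 2 * (XC x g ^ 2 + (1 - x ^ 2) * YC x g ^ 2) = (1 + x) * K3 x g.
Proof. unfold_polys. unfold K3. ring. Qed.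

Lemma E4 (x g : R) : 16 * 420 * Dg g * (XB x g * XA x g + (1 - x ^ 2) * YB x g * YA x g)
  - 105 * (1 - 2 * g) ^ 6 * (XA x g ^ 2 + (1 - x ^ 2) * YA x g ^ 2) = (1 + x) * K4 x g.
Proof. unfold_polys. unfold K4. ring. Qed.

Lemma ED (g : R) : Dg g - 1 = KD 0 g.
Proof. unfold_polys. unfold KD. ring. Qed.
Lemma EC (g : R) : Cp g - 1 = KC 0 g.
Proof. unfold_polys. unfold KC. ring. Qed.

Lemma XA_m1 (g : R) : XA (-1) g = 64 * Dg g.
Proof. unfold_polys. ring. Qed.
Lemma XB_m1 (g : R) : XB (-1) g = (1 - 2 * g) ^ 6.
Proof. unfold_polys. ring. Qed.
Lemma XC_m1 (g : R) : XC (-1) g = Cp g.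
Proof. unfold_polys. ring. Qed.
Lemma XA_1 (g : R) : XA 1 g = 420.
Proof. unfold_polys. ring. Qed.

Lemma sc (t : R) : sin t ^ 2 = 1 - cos t ^ 2.
Proof. pose proof (sin2_cos2 t) as H. unfold Rsqr in H. simpl. lra. Qed.

Lemma cos_sin_n (n : nat) (t : R) :
  cos (INR n * t) = Tc n (cos t) /\ sin (INR n * t) = sin t * Uc n (cos t).
Proof.
  induction n as [|n [IHc IHs]].
  - simpl. rewrite Rmult_0_l, cos_0, sin_0. split; ring.
  - rewrite S_INR, Rmult_plus_distr_r, Rmult_1_l, cos_plus, sin_plus, IHc, IHs.
    cbn [Tc Uc]. pose proof (sc t) as H. split.
    + replace (1 - cos t ^ 2) with (sin t ^ 2) by lra. ring.
    + ring.
Qed.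

Lemma trig_sum_eq (p : nat -> R) (n : nat) (t : R) :
  trig_sum p n t = (sum_f_R0 (fun j => p j * Tc j (cos t)) n,
                    sin t * sum_f_R0 (fun j => p j * Uc j (cos t)) n).
Proof.
  unfold trig_sum. induction n as [|n IH].
  - rewrite sum_O. simpl sum_f_R0. unfold cexpi.
    destruct (cos_sin_n 0 t) as [H1 H2]. rewrite H1, H2.
    unfold Cmult, RtoC; simpl. f_equal; ring.
  - rewrite sum_Sn, IH. simpl sum_f_R0. unfold cexpi.
    destruct (cos_sin_n (S n) t) as [H1 H2]. rewrite H1, H2.
    unfold plus; simpl. unfold Cplus, Cmult, RtoC; simpl. f_equal; ring.
Qed.

Lemma Cmod_pair (u v : R) : Cmod (u, v) = sqrt (u ^ 2 + v ^ 2).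
Proof. reflexivity. Qed.

Lemma Re_div (b1 b2 a1 a2 : R) : a1 ^ 2 + a2 ^ 2 <> 0 ->
  Re (Cdiv (b1, b2) (a1, a2)) = (b1 * a1 + b2 * a2) / (a1 ^ 2 + a2 ^ 2).
Proof. intros H. unfold Cdiv, Cmult, Cinv, Re; simpl. field. intro E. apply H. rewrite <- E. ring. Qed.

Theorem mainTheorem14 (g : R) (a b c : nat -> R) :
  11 / 5 <= g <= 9 ->
  SIEMS_a_coeffs 7 g a -> SIEMS_b_coeffs 7 g b -> SIEMS_c_coeffs 7 g c ->
  let aT := trig_sum a 6 in
  let bT := trig_sum b 7 in
  let cT := trig_sum c 6 in
  let sigmaE := Cmod (cT PI) / Cmod (aT PI) in
  let lambdaI :=
    105 * (1 - 2 * g) ^ 6 /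
    (16 * (420 * g ^ 6 - 1050 * g ^ 4 + 1400 * g ^ 3 - 840 * g ^ 2 + 252 * g - 31)) in
  (forall t, aT t <> RtoC 0) /\
  is_max_of (range_0_2pi (fun t => Cmod (Cinv (aT t)))) 1 /\
  is_max_of (range_0_2pi (fun t => Cmod (Cdiv (cT t) (aT t)))) sigmaE /\
  is_min_of (range_0_2pi (fun t => Re (Cdiv (bT t) (aT t)))) lambdaI /\
  lambdaI / sigmaE =
    (1 - 2 * g) ^ 6 /
    (64 * g ^ 6 + 192 * g ^ 5 - 240 * g ^ 4 + 160 * g ^ 3 - 60 * g ^ 2 + 12 * g - 1).
Proof.
  intros Hg Ha Hb Hc.
  destruct (a_vals g a Ha) as (a0&a1&a2&a3&a4&a5&a6).
  destruct (b_vals g b Hb) as (b0&b1&b2&b3&b4&b5&b6&b7).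
  destruct (c_vals g c Hc) as (c0&c1&c2&c3&c4&c5&c6).
  assert (HaT : forall t, trig_sum a 6 t = (XA (cos t) g / 420, sin t * YA (cos t) g / 420)).
  { intros t. rewrite trig_sum_eq. unfold XA, YA. rewrite !sum7. cbv beta.
    rewrite a0, a1, a2, a3, a4, a5, a6. f_equal; field. }
  assert (HbT : forall t, trig_sum b 7 t = (XB (cos t) g, sin t * YB (cos t) g)).
  { intros t. rewrite trig_sum_eq. unfold XB, YB. rewrite !sum8. cbv beta.
    rewrite b0, b1, b2, b3, b4, b5, b6, b7. reflexivity. }
  assert (HcT : forall t, trig_sum c 6 t = (XC (cos t) g, sin t * YC (cos t) g)).
  { intros t. rewrite trig_sum_eq. unfold XC, YC. rewrite !sum7. cbv beta.
    rewrite c0, c1, c2, c3, c4, c5, c6. reflexivity. }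
  assert (HD : 1 <= Dg g).
  { pose proof (ED g). pose proof (KD_0_nonneg 0 g ltac:(lra) Hg). lra. }
  assert (HC : 1 <= Cp g).
  { pose proof (EC g). pose proof (KC_0_nonneg 0 g ltac:(lra) Hg). lra. }
  assert (HNA : forall t, 420 ^ 2 <= XA (cos t) g ^ 2 + (1 - cos t ^ 2) * YA (cos t) g ^ 2).
  { intros t. pose proof (COS_bound t) as Hx. pose proof (E2 (cos t) g) as E.
    pose proof (K2_nonneg (cos t) g Hx Hg) as K.
    assert (0 <= (1 - cos t) * K2 (cos t) g) by (apply Rmult_le_pos; lra). lra. }
  assert (Hmod2 : forall t, (XA (cos t) g / 420) ^ 2 + (sin t * YA (cos t) g / 420) ^ 2
                   = (XA (cos t) g ^ 2 + (1 - cos t ^ 2) * YA (cos t) g ^ 2) / 420 ^ 2).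
  { intros t. rewrite <- sc. field. }
  assert (Hmodge : forall t, 1 <= Cmod (trig_sum a 6 t)).
  { intros t. rewrite HaT, Cmod_pair, Hmod2. apply Rle_trans with (sqrt 1); [rewrite sqrt_1; lra|]. apply sqrt_le_1_alt.
    pose proof (HNA t). apply (Rmult_le_reg_r (420 ^ 2)). lra.
    unfold Rdiv. rewrite Rmult_assoc, Rinv_l by lra. lra. }
  assert (Hnz : forall t, trig_sum a 6 t <> RtoC 0).
  { intros t E. pose proof (Hmodge t) as H. rewrite E, Cmod_0 in H. lra. }
  assert (HPI : 0 <= PI < 2 * PI) by (pose proof PI_RGT_0; lra).
  assert (H0 : 0 <= 0 < 2 * PI) by (pose proof PI_RGT_0; lra).
  cbv zeta.
  split; [exact Hnz|].
  split.
  {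
    split.
    - exists 0. split; [exact H0|].
      rewrite Cmod_inv by apply Hnz.
      rewrite HaT, cos_0, sin_0, XA_1.
      replace (420 / 420, 0 * YA 1 g / 420) with (RtoC 1) by (unfold RtoC; f_equal; field).
      rewrite Cmod_1. field.
    - intros v [t [Ht ->]].
      rewrite Cmod_inv by apply Hnz.
      pose proof (Hmodge t). rewrite <- Rinv_1. apply Rinv_le_contravar; lra. }
  split.
  {
    split.
    - exists PI. split; [exact HPI|]. rewrite Cmod_div by apply Hnz. reflexivity.
    - intros v [t [Ht ->]].
      rewrite Cmod_div by apply Hnz.
      pose proof (Hmodge t) as M1. pose proof (Hmodge PI) as M2.
      apply (Rmult_le_reg_r (Cmod (trig_sum a 6 t) * Cmod (trig_sum a 6 PI))).
      { apply Rmult_lt_0_compat; lra. }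
      replace (Cmod (trig_sum c 6 t) / Cmod (trig_sum a 6 t) *
               (Cmod (trig_sum a 6 t) * Cmod (trig_sum a 6 PI)))
        with (Cmod (trig_sum c 6 t) * Cmod (trig_sum a 6 PI)) by (field; lra).
      replace (Cmod (trig_sum c 6 PI) / Cmod (trig_sum a 6 PI) *
               (Cmod (trig_sum a 6 t) * Cmod (trig_sum a 6 PI)))
        with (Cmod (trig_sum c 6 PI) * Cmod (trig_sum a 6 t)) by (field; lra).
      rewrite !HaT, !HcT, !Cmod_pair, cos_PI, sin_PI.
      rewrite <- !sqrt_mult by (apply Rplus_le_le_0_compat; apply pow2_ge_0).
      apply sqrt_le_1_alt.
      pose proof (COS_bound t) as Hx.
      pose proof (E3 (cos t) g) as E.
      pose proof (K3_0_nonneg (cos t) g Hx Hg) as K.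
      assert (0 <= (1 + cos t) * K3 (cos t) g) by (apply Rmult_le_pos; lra).
      replace ((sin t * YC (cos t) g) ^ 2) with (sin t ^ 2 * YC (cos t) g ^ 2) by ring.
      replace ((sin t * YA (cos t) g / 420) ^ 2) with (sin t ^ 2 * YA (cos t) g ^ 2 / 420 ^ 2) by field.
      rewrite sc.
      replace ((0 * YC (-1) g) ^ 2) with 0 by ring.
      replace ((0 * YA (-1) g / 420) ^ 2) with 0 by field.
      replace ((XA (-1) g / 420) ^ 2) with (XA (-1) g ^ 2 / 420 ^ 2) by field.
      replace ((XA (cos t) g / 420) ^ 2) with (XA (cos t) g ^ 2 / 420 ^ 2) by field.
      lra. }
  split.
  {
    assert (HL : forall t, Re (trig_sum b 7 t / trig_sum a 6 t)
       = 420 * (XB (cos t) g * XA (cos t) g + (1 - cos t ^ 2) * YB (cos t) g * YA (cos t) g)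
         / (XA (cos t) g ^ 2 + (1 - cos t ^ 2) * YA (cos t) g ^ 2)).
    { intros t. pose proof (HNA t). rewrite HaT, HbT, Re_div, Hmod2.
      - rewrite <- sc. field.
        replace ((sin t * YA (cos t) g) ^ 2) with (sin t ^ 2 * YA (cos t) g ^ 2) by ring.
        rewrite sc. lra.
      - intro E0. pose proof (Hmod2 t) as E1. rewrite E0 in E1.
        assert (0 < (XA (cos t) g ^ 2 + (1 - cos t ^ 2) * YA (cos t) g ^ 2) / 420 ^ 2)
          by (apply Rdiv_lt_0_compat; lra). lra. }
    split.
    - exists PI. split; [exact HPI|]. rewrite HL, cos_PI, XA_m1, XB_m1.
      unfold Dg. field. fold (Dg g). lra.
    - intros v [t [Ht ->]]. rewrite HL.
      pose proof (HNA t) as HN.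
      pose proof (COS_bound t) as Hx.
      pose proof (E4 (cos t) g) as E.
      pose proof (K4_0_nonneg (cos t) g Hx Hg) as K.
      assert (0 <= (1 + cos t) * K4 (cos t) g) by (apply Rmult_le_pos; lra).
      fold (Dg g).
      assert (Ediff : 420 * (XB (cos t) g * XA (cos t) g + (1 - cos t ^ 2) * YB (cos t) g * YA (cos t) g)
         / (XA (cos t) g ^ 2 + (1 - cos t ^ 2) * YA (cos t) g ^ 2) - 105 * (1 - 2 * g) ^ 6 / (16 * Dg g)
         = (1 + cos t) * K4 (cos t) g / (16 * Dg g * (XA (cos t) g ^ 2 + (1 - cos t ^ 2) * YA (cos t) g ^ 2))).
      { rewrite <- E. field. split; lra. }
      assert (0 <= (1 + cos t) * K4 (cos t) g / (16 * Dg g * (XA (cos t) g ^ 2 + (1 - cos t ^ 2) * YA (cos t) g ^ 2))).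
      { apply Rdiv_le_0_compat; [lra|]. apply Rmult_lt_0_compat; lra. }
      lra. }
  rewrite HaT, HcT, cos_PI, sin_PI, !Cmod_pair, XA_m1, XC_m1.
  replace ((64 * Dg g / 420) ^ 2 + (0 * YA (-1) g / 420) ^ 2) with ((64 * Dg g / 420) ^ 2) by field.
  replace (Cp g ^ 2 + (0 * YC (-1) g) ^ 2) with (Cp g ^ 2) by ring.
  rewrite !sqrt_pow2 by (try apply Rdiv_le_0_compat; lra).
  fold (Dg g). fold (Cp g).
  field. split; lra.
Qed.
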